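(* Let two realisations of local affine Gaudin models be given, labelled $k\in\{1,2\}$, built on the same $\mathfrak g$, $\mathfrak g_0$, $\mathbb D$ and with the same constant $\ell^\infty\in\mathbb R\setminus\{0\}$. Model $k$ has site set $\Sigma^{(k)}$ (with $\Sigma^{(1)}\cap\Sigma^{(2)}=\emptyset$), multiplicities $m_\alpha$, levels $\ell^\alpha_{[p]}$, positions $z_\alpha$, Takiff currents $\mathcal J^\alpha_{[p]}(x)$ in a Poisson algebra $\mathcal A_k$, twist function $\varphi_k(z)=\sum_{\alpha\in\Sigma^{(k)}}\sum_{p=0}^{m_\alpha-1}\frac{\ell^\alpha_{[p]}}{(z-z_\alpha)^{p+1}}-\ell^\infty$ and Gaudin Lax matrix $\Gamma_k(z,x)=\sum_{\alpha\in\Sigma^{(k)}}\sum_{p=0}^{m_\alpha-1}\frac{\mathcal J^\alpha_{[p]}(x)}{(z-z_\alpha)^{p+1}}$. Let $M_k=\sum_{\alpha\in\Sigma^{(k)}}m_\alpha$, $M=M_1+M_2$, and assume the zeros of $\varphi_1$, labelled $\zeta^{(1)}_i$ ($1\le i\le M_1$), and those of $\varphi_2$, labelled $\zeta^{(2)}_i$ ($M_1<i\le M$), are simple. Let $\epsilon^{(1)}_i$ ($1\le i\le M_1$), $\epsilon^{(2)}_i$ ($M_1<i\le M$) be numbers and $\mathcal H_k=\sum_i\epsilon^{(k)}_i\mathcal Q^{(k)}_i$ with $\mathcal Q^{(k)}_i=-\frac{1}{2\varphi_k'(\zeta^{(k)}_i)}\int_{\mathbb D}dx\,\kappa\big(\Gamma_k(\zeta^{(k)}_i,x),\Gamma_k(\zeta^{(k)}_i,x)\big)$.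 For a real $\gamma\neq0$, consider the coupled model on $\mathcal A_1\otimes\mathcal A_2$ with sites $\Sigma^{(1)}\sqcup\Sigma^{(2)}$, the same multiplicities, levels and currents, the same constant $\ell^\infty$, and positions $w_\alpha=z_\alpha$ for $\alpha\in\Sigma^{(1)}$ and $w_\alpha=z_\alpha+\gamma^{-1}$ for $\alpha\in\Sigma^{(2)}$; its twist function is $\varphi_{1\otimes2,\gamma}(z)=\varphi_1(z)+\varphi_2(z-\gamma^{-1})+\ell^\infty$ and its Gaudin Lax matrix $\Gamma_{1\otimes 2,\gamma}(z,x)=\Gamma_1(z,x)+\Gamma_2(z-\gamma^{-1},x)$. Then: (i) for $\gamma$ small enough, one can order the $M$ zeros $\zeta_i(\gamma)$, $i\in\{1,\dots,M\}$, of $\varphi_{1\otimes2,\gamma}$ in such a way that $\zeta_i(\gamma)$ is canonically associated with $\zeta^{(k)}_i$, where $k=1$ if $i\le M_1$ and $k=2$ if $i>M_1$ (namely $\zeta_i(\gamma)\to\zeta^{(1)}_i$ for $i\le M_1$ and $\zeta_i(\gamma)-\gamma^{-1}\to\zeta^{(2)}_i$ for $i>M_1$ as $\gamma\to0$); moreover, for $\gamma$ small enough these zeros are simple. (ii) If one chooses $\epsilon_i=\epsilon^{(k)}_i$ (with $k$ as in (i)), then the coupled Hamiltonian $\mathcal H_\gamma=\sum_{i=1}^M\epsilon_i\Big(-\frac{1}{2\varphi_{1\otimes2,\gamma}'(\zeta_i(\gamma))}\int_{\mathbb D}dx\,\kappa\big(\Gamma_{1\otimes2,\gamma}(\zeta_i(\gamma),x),\Gamma_{1\otimes2,\gamma}(\zeta_i(\gamma),x)\big)\Big)$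 satisfies $\mathcal H_\gamma\to\mathcal H_1+\mathcal H_2$ as $\gamma\to0$.
   Context: $\mathfrak g$ is a finite-dimensional simple complex Lie algebra, $\kappa$ is minus its Killing form, $(I_a)$ a basis with $\kappa$-dual basis $(I^a)$, $C_{12}=I_a\otimes I^a$. $\mathfrak g_0$ is a real form, the fixed points of an antilinear involutive automorphism $\tau$. $\mathbb D$ is $\mathbb R$ or the circle, with coordinate $x$; $\delta_{xy}=\delta(x-y)$, $\delta'_{xy}=\partial_x\delta(x-y)$. A realisation of a local affine Gaudin model consists of: finite sets $\Sigma_r$ (real sites) and $\Sigma_c$ (complex sites), for each complex site $\alpha$ a conjugate site $\bar\alpha$, and $\Sigma=\Sigma_r\sqcup\Sigma_c\sqcup\bar\Sigma_c$; multiplicities $m_\alpha\ge1$ ($m_{\bar\alpha}=m_\alpha$); levels $\ell^\alpha_{[p]}$, $0\le p\le m_\alpha-1$, real for real sites, complex for complex sites, $\ell^{\bar\alpha}_{[p]}=\overline{\ell^\alpha_{[p]}}$, with $\ell^\alpha_{[m_\alpha-1]}\neq0$; pairwise distinct positions $z_\alpha$, real for real sites, $z_{\bar\alpha}=\overline{z_\alpha}$; a Poisson algebra $\mathcal A$ of local observables of a field theory on $\mathbb D$ containing $\mathfrak g$-valued fields $\mathcal J^\alpha_{[p]}(x)$ with $\{\mathcal J^\alpha_{[p]}{}_1(x),\mathcal J^\beta_{[q]}{}_2(y)\}=\delta_{\alpha\beta}\big([C_{12},\mathcal J^\alpha_{[p+q]}{}_1(x)]\delta_{xy}-\ell^\alpha_{[p+q]}C_{12}\delta'_{xy}\big)$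 if $p+q<m_\alpha$ and $0$ otherwise, and $\tau(\mathcal J^\alpha_{[p]})=\mathcal J^\alpha_{[p]}$ for real $\alpha$, $\tau(\mathcal J^\alpha_{[p]})=\mathcal J^{\bar\alpha}_{[p]}$ for complex $\alpha$. The tensor product $\mathcal A_1\otimes\mathcal A_2$ denotes the Poisson algebra generated by the fields of both algebras, with fields from different factors Poisson commuting. Sums over sites of model $k$ run over all its sites (real, complex and conjugate). *)

(* Defs.v *)
From HB Require Import structures.
From mathcomp Require Import all_boot all_order all_algebra.
From mathcomp Require Import all_classical all_reals all_analysis.
From mathcomp Require Import complex.
Import Order.TTheory GRing.Theory Num.Theory.
Import numFieldNormedType.Exports.

Set Implicit Arguments.
Unset Strict Implicit.
Unset Printing Implicit Defensive.

Local Open Scope ring_scope.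
Local Open Scope classical_set_scope.

(* Standard (norm) topology / normed-module structure on R[i] over itself,
   so that limits and the complex derivative  derive1  make sense on R[i]. *)
HB.instance Definition _ (R : realType) := GRing.ComAlgebra.copy R[i] (R[i])^o.
HB.instance Definition _ (R : realType) := NormedModule.copy R[i] (R[i])^o.

Section GaudinDefs.
Variable R : realType.
Local Notation C := (R[i]).

Definition RtoC (x : R) : C := Complex x 0.

(* The Lie algebra g : C^n (row vectors) with bracket given by structure
   constants  [e_a, e_b] = \sum_c f a b c e_c  in the basis (e_a).      *)
Section Lie.
Variable n : nat.
Variable f : 'I_n -> 'I_n -> 'I_n -> C.

Definition lie_br (u v : 'rV[C]_n) : 'rV[C]_n :=
  \row_c \sum_a \sum_b u 0 a * v 0 b * f a b c.

Definition is_lie_algebra : Prop :=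
  (forall u, lie_br u u = 0) /\
  (forall u v w, lie_br u (lie_br v w) + lie_br v (lie_br w u)
                 + lie_br w (lie_br u v) = 0).

(* V (a matrix, through its row space) is an ideal of g *)
Definition lie_ideal (V : 'M[C]_n) : Prop :=
  forall u v : 'rV[C]_n, (u <= V)%MS -> (lie_br v u <= V)%MS.

Definition is_simple_lie : Prop :=
  is_lie_algebra /\ (exists u v, lie_br u v != 0) /\
  (forall V : 'M[C]_n, lie_ideal V -> \rank V = 0%N \/ \rank V = n).

(* matrix of ad u acting on row vectors:  v *m ad u = [u, v] *)
Definition ad (u : 'rV[C]_n) : 'M[C]_n :=
  \matrix_(b, c) \sum_a u 0 a * f a b c.

Definition killing (u v : 'rV[C]_n) : C := \tr (ad u *m ad v).

Definition kappa (u v : 'rV[C]_n) : C := - killing u v.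

(* tau : antilinear involutive automorphism of g; g_0 = its fixed points *)
Definition is_real_form (tau : 'rV[C]_n -> 'rV[C]_n) : Prop :=
  [/\ (forall u v, tau (u + v) = tau u + tau v),
      (forall (c : C) u, tau (c *: u) = conjc c *: tau u),
      (forall u, tau (tau u) = u) &
      (forall u v, tau (lie_br u v) = lie_br (tau u) (tau v))].
End Lie.

(* Space D: None = the real line, Some L = the circle of length L,
   realised as [0, L[ with periodic fields; dx = Lebesgue measure.     *)
Definition Ddom (circ : option R) : set R :=
  if circ is Some L then `[0, L[ else setT.

Definition cint (circ : option R) (g : R -> C) : C :=
  Complex (Rintegral (@lebesgue_measure R) (Ddom circ) (fun x => complex.Re (g x)))
          (Rintegral (@lebesgue_measure R) (Ddom circ) (fun x => complex.Im (g x))).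

(* S : sites (Sigma);  sg : S -> S the involution alpha |-> conjugate site
   (real sites = fixed points of sg, complex sites paired with their
   conjugates);  m : multiplicities;  l a p = level l^a_[p];  z : positions. *)
Definition is_realisation (S : finType) (sg : S -> S) (m : S -> nat)
    (l : S -> nat -> C) (z : S -> C) : Prop :=
  (forall a, sg (sg a) = a) /\
  (forall a, (0 < m a)%N) /\
  (forall a, m (sg a) = m a) /\
  (forall a p, (p < m a)%N -> l (sg a) p = conjc (l a p)) /\
  (forall a, l a (m a).-1 != 0) /\
  (forall a, z (sg a) = conjc (z a)) /\
  injective z.

Definition nsum (S : finType) (m : S -> nat) : nat := (\sum_(a : S) m a)%N.

Definition twist (S : finType) (m : S -> nat) (l : S -> nat -> C) (z : S -> C)
    (linf : R) (w : C) : C :=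
  \sum_(a : S) \sum_(p < m a) l a p / (w - z a) ^+ p.+1 - RtoC linf.

Definition lax (n : nat) (S : finType) (m : S -> nat) (z : S -> C)
    (J : S -> nat -> R -> 'rV[C]_n) (w : C) (x : R) : 'rV[C]_n :=
  \sum_(a : S) \sum_(p < m a) ((w - z a) ^+ p.+1)^-1 *: J a p x.

Definition simple_zero_enum (phi : C -> C) (poles : set C) (M : nat)
    (zeta : 'I_M -> C) : Prop :=
  [/\ injective zeta,
      (forall i, ~ poles (zeta i) /\ phi (zeta i) = 0 /\ derive1 phi (zeta i) != 0) &
      (forall w, ~ poles w -> phi w = 0 -> exists i, w = zeta i)].

Definition charge (n : nat) (f : 'I_n -> 'I_n -> 'I_n -> C) (circ : option R)
    (S : finType) (m : S -> nat) (l : S -> nat -> C) (z : S -> C) (linf : R)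
    (J : S -> nat -> R -> 'rV[C]_n) (zeta : C) : C :=
  - (2 * derive1 (twist m l z linf) zeta)^-1 *
    cint circ (fun x => kappa f (lax m z J zeta x) (lax m z J zeta x)).

Definition hamiltonian (n : nat) (f : 'I_n -> 'I_n -> 'I_n -> C) (circ : option R)
    (S : finType) (m : S -> nat) (l : S -> nat -> C) (z : S -> C) (linf : R)
    (J : S -> nat -> R -> 'rV[C]_n) (M : nat) (zeta : 'I_M -> C) (eps : 'I_M -> C) : C :=
  \sum_(i < M) eps i * charge f circ m l z linf J (zeta i).

(* A configuration of the Takiff currents J^a_[p](x) (a classical-field
   realisation of the Poisson algebra A): reality condition w.r.t. tau,
   periodicity on the circle, and local integrability of all the
   quadratic densities kappa(J^a_p, J^b_q) over D. *)
Definition admissible_config (n : nat) (f : 'I_n -> 'I_n -> 'I_n -> C)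
    (tau : 'rV[C]_n -> 'rV[C]_n) (circ : option R)
    (S : finType) (sg : S -> S) (m : S -> nat) (J : S -> nat -> R -> 'rV[C]_n) : Prop :=
  [/\ (forall a p x, (p < m a)%N -> tau (J a p x) = J (sg a) p x),
      (forall L, circ = Some L -> forall a p x, J a p (x + L) = J a p x) &
      (forall a b p q, (p < m a)%N -> (q < m b)%N ->
         (@lebesgue_measure R).-integrable (Ddom circ)
            (EFin \o (fun x => complex.Re (kappa f (J a p x) (J b q x)))) /\
         (@lebesgue_measure R).-integrable (Ddom circ)
            (EFin \o (fun x => complex.Im (kappa f (J a p x) (J b q x)))))].

Definition sumf (S1 S2 : finType) (X : Type) (f1 : S1 -> X) (f2 : S2 -> X)
    (s : (S1 + S2)%type) : X :=
  match s with inl a => f1 a | inr b => f2 b end.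

Definition sum_sg (S1 S2 : finType) (sg1 : S1 -> S1) (sg2 : S2 -> S2)
    (s : (S1 + S2)%type) : (S1 + S2)%type :=
  match s with inl a => inl (sg1 a) | inr b => inr (sg2 b) end.

Definition cpos (S1 S2 : finType) (z1 : S1 -> C) (z2 : S2 -> C) (gamma : R) :
    (S1 + S2)%type -> C :=
  sumf z1 (fun b => z2 b + RtoC gamma^-1).

Definition sum_idx (M1 M2 : nat) (X : Type) (e1 : 'I_M1 -> X) (e2 : 'I_M2 -> X)
    (i : 'I_(M1 + M2)) : X :=
  match fintype.split i with inl i1 => e1 i1 | inr i2 => e2 i2 end.

Definition coupled_zero_ordering (S1 S2 : finType) (m1 : S1 -> nat) (m2 : S2 -> nat)
    (l1 : S1 -> nat -> C) (l2 : S2 -> nat -> C) (z1 : S1 -> C) (z2 : S2 -> C)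
    (linf : R) (M1 M2 : nat) (zeta1 : 'I_M1 -> C) (zeta2 : 'I_M2 -> C)
    (zeta : R -> 'I_(M1 + M2) -> C) : Prop :=
  [/\ (exists2 d : R, 0 < d & forall g : R, 0 < `|g| < d ->
         simple_zero_enum (twist (sumf m1 m2) (sumf l1 l2) (cpos z1 z2 g) linf)
                          (range (cpos z1 z2 g)) (zeta g)),
      (forall i : 'I_M1, zeta g (lshift M2 i) @[g --> (0 : R)^'] --> zeta1 i) &
      (forall j : 'I_M2, (zeta g (rshift M1 j) - RtoC g^-1) @[g --> (0 : R)^']
                           --> zeta2 j)].

End GaudinDefs.

(* Main.v *)
Require Import Defs.
From HB Require Import structures.
From mathcomp Require Import all_boot all_order all_algebra.
From mathcomp Require Import all_classical all_reals all_analysis.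
From mathcomp Require Import complex.
Import Order.TTheory GRing.Theory Num.Theory.
Import numFieldNormedType.Exports.
Local Open Scope ring_scope.
Local Open Scope classical_set_scope.

From mathcomp Require Import ring.
From Stdlib Require Import Lia.
From mathcomp Require Import zify.
Set Implicit Arguments.
Unset Strict Implicit.
Unset Printing Implicit Defensive.


Section Lim.
Variable R : realType.
Local Notation C := (R[i]).

Lemma cvg_sum_seq (T : Type) (F : set_system T) {FF : Filter F} (I : Type) (r : seq I)
  (f : I -> T -> C) (a : I -> C) :
  (forall i, f i x @[x --> F] --> a i) ->
  (\sum_(i <- r) f i x) @[x --> F] --> \sum_(i <- r) a i.
Proof.
move=> H; elim: r => [|i r IH].
  rewrite big_nil; under eq_fun do rewrite big_nil; exact: cvg_cst.
rewrite big_cons; under eq_fun do rewrite big_cons.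
exact: (cvgD (H i) IH).
Qed.

Lemma cvg_prod_seq (T : Type) (F : set_system T) {FF : Filter F} (I : Type) (r : seq I)
  (f : I -> T -> C) (a : I -> C) :
  (forall i, f i x @[x --> F] --> a i) ->
  (\prod_(i <- r) f i x) @[x --> F] --> \prod_(i <- r) a i.
Proof.
move=> H; elim: r => [|i r IH].
  rewrite big_nil; under eq_fun do rewrite big_nil; exact: cvg_cst.
rewrite big_cons; under eq_fun do rewrite big_cons.
exact: (cvgM (H i) IH).
Qed.

Lemma cvgXn (T : Type) (F : set_system T) {FF : Filter F} (f : T -> C) (a : C) n :
  f x @[x --> F] --> a -> (f x ^+ n) @[x --> F] --> a ^+ n.
Proof.
move=> H; elim: n => [|n IH].
  rewrite expr0; under eq_fun do rewrite expr0; exact: cvg_cst.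
rewrite exprS; under eq_fun do rewrite exprS.
exact: (cvgM H IH).
Qed.

Lemma normRtoC (x : R) : `|RtoC x| = RtoC `|x|.
Proof.
rewrite normc_def /RtoC /=; congr (_%:C)%C.
by rewrite expr0n /= addr0 sqrtr_sqr.
Qed.

Lemma RtoC_cvg0 : RtoC g @[g --> (0 : R)^'] --> 0.
Proof.
apply/cvgrPdist_lt => -[a b]; rewrite ltcE /= => /andP[/eqP Hb e0']; subst b.
near=> g; rewrite sub0r normrN normRtoC /RtoC ltcE /=.

near: g.
have : (fun g : R => g) @ (0:R)^' --> (0:R) by apply: cvg_within.
move/cvgrPdist_lt => /(_ _ e0'); apply: filterS => x.
by rewrite sub0r normrN eqxx.
Unshelve. all: by end_near.
Qed.


Lemma RtoCV (x : R) : RtoC x^-1 = (RtoC x)^-1.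
Proof. exact: (fmorphV (real_complex R)). Qed.

Lemma RtoC_eq0 (x : R) : (RtoC x == 0) = (x == 0).
Proof. by rewrite /RtoC eq_complex /= eqxx andbT. Qed.

Lemma inv_minus_h (c_ : R -> C) (c : C) :
  c_ g @[g --> (0:R)^'] --> c ->
  (c_ g - RtoC g^-1)^-1 @[g --> (0:R)^'] --> 0.
Proof.
move=> Hc.
have E : {near (0:R)^', (fun g => RtoC g * (c_ g * RtoC g - 1)^-1) =1
                        (fun g => (c_ g - RtoC g^-1)^-1)}.
  near=> g.
  have gn0 : g != 0 by near: g; exact: nbhs_dnbhs_neq.
  have xn0 : RtoC g != 0 by rewrite RtoC_eq0.
  rewrite RtoCV.
  have -> : c_ g - (RtoC g)^-1 = (c_ g * RtoC g - 1) * (RtoC g)^-1.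
    by rewrite mulrBl mulfK // mul1r.
  by rewrite invfM invrK mulrC.
apply: (cvg_trans (near_eq_cvg E)).
have -> : (0 : C) = 0 * (c * 0 - 1)^-1 by rewrite mul0r.
have H1 : (c_ g * RtoC g - 1) @[g --> (0:R)^'] --> c * 0 - 1.
  exact: (cvgB (cvgM Hc RtoC_cvg0) (cvg_cst (1:C))).
have H2 : c * 0 - 1 != 0 by rewrite mulr0 sub0r oppr_eq0 oner_eq0.
exact: (cvgM RtoC_cvg0 (cvgV H2 H1)).
Unshelve. all: by end_near.
Qed.

Lemma inv_plus_h (c_ : R -> C) (c : C) :
  c_ g @[g --> (0:R)^'] --> c ->
  (c_ g + RtoC g^-1)^-1 @[g --> (0:R)^'] --> 0.
Proof.
move=> Hc.
have E : {near (0:R)^', (fun g => RtoC g * (c_ g * RtoC g + 1)^-1) =1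
                        (fun g => (c_ g + RtoC g^-1)^-1)}.
  near=> g.
  have gn0 : g != 0 by near: g; exact: nbhs_dnbhs_neq.
  have xn0 : RtoC g != 0 by rewrite RtoC_eq0.
  rewrite RtoCV.
  have -> : c_ g + (RtoC g)^-1 = (c_ g * RtoC g + 1) * (RtoC g)^-1.
    by rewrite mulrDl mulfK // mul1r.
  by rewrite invfM invrK mulrC.
apply: (cvg_trans (near_eq_cvg E)).
have -> : (0 : C) = 0 * (c * 0 + 1)^-1 by rewrite mul0r.
have H1 : (c_ g * RtoC g + 1) @[g --> (0:R)^'] --> c * 0 + 1.
  exact: (cvgD (cvgM Hc RtoC_cvg0) (cvg_cst (1:C))).
have H2 : c * 0 + 1 != 0 by rewrite mulr0 add0r oner_eq0.
exact: (cvgM RtoC_cvg0 (cvgV H2 H1)).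
Unshelve. all: by end_near.
Qed.

Lemma ev_minus_h_neq0 (c_ : R -> C) (c : C) :
  c_ g @[g --> (0:R)^'] --> c ->
  \forall g \near (0:R)^', c_ g - RtoC g^-1 != 0.
Proof.
move=> Hc.
have H1 : (c_ g * RtoC g - 1) @[g --> (0:R)^'] --> c * 0 - 1.
  exact: (cvgB (cvgM Hc RtoC_cvg0) (cvg_cst (1:C))).
have H2 : 0 < `|c * 0 - 1| by rewrite normr_gt0 mulr0 sub0r oppr_eq0 oner_eq0.
move/cvgrPdist_lt : H1 => /(_ _ H2) H1.
near=> g.
have gn0 : g != 0 by near: g; exact: nbhs_dnbhs_neq.
have xn0 : RtoC g != 0 by rewrite RtoC_eq0.
have Hg : `|c * 0 - 1 - (c_ g * RtoC g - 1)| < `|c * 0 - 1| by near: g.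
rewrite RtoCV.
have -> : c_ g - (RtoC g)^-1 = (c_ g * RtoC g - 1) * (RtoC g)^-1.
  by rewrite mulrBl mulfK // mul1r.
rewrite mulf_neq0 ?invr_eq0 //.
apply/negP => /eqP E; move: Hg; rewrite E subr0 ltxx.
by [].
Unshelve. all: by end_near.
Qed.

Lemma ev_plus_h_neq0 (c_ : R -> C) (c : C) :
  c_ g @[g --> (0:R)^'] --> c ->
  \forall g \near (0:R)^', c_ g + RtoC g^-1 != 0.
Proof.
move=> Hc.
have H1 : (c_ g * RtoC g + 1) @[g --> (0:R)^'] --> c * 0 + 1.
  exact: (cvgD (cvgM Hc RtoC_cvg0) (cvg_cst (1:C))).
have H2 : 0 < `|c * 0 + 1| by rewrite normr_gt0 mulr0 add0r oner_eq0.
move/cvgrPdist_lt : H1 => /(_ _ H2) H1.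
near=> g.
have gn0 : g != 0 by near: g; exact: nbhs_dnbhs_neq.
have xn0 : RtoC g != 0 by rewrite RtoC_eq0.
have Hg : `|c * 0 + 1 - (c_ g * RtoC g + 1)| < `|c * 0 + 1| by near: g.
rewrite RtoCV.
have -> : c_ g + (RtoC g)^-1 = (c_ g * RtoC g + 1) * (RtoC g)^-1.
  by rewrite mulrDl mulfK // mul1r.
rewrite mulf_neq0 ?invr_eq0 //.
apply/negP => /eqP E; move: Hg; rewrite E subr0 ltxx.
by [].
Unshelve. all: by end_near.
Qed.

Lemma ev_norm_lt (T : Type) (F : set_system T) {FF : Filter F} (f g : T -> C) (g0 : C) :
  f x @[x --> F] --> 0 -> g x @[x --> F] --> g0 -> g0 != 0 ->
  \forall x \near F, `|f x| < `|g x|.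
Proof.
move=> Hf Hg g0n0.
have e0 : 0 < `|g0| / 2 by rewrite divr_gt0 // normr_gt0.
move/cvgrPdist_lt : Hf => /(_ _ e0) Hf.
move/cvgrPdist_lt : Hg => /(_ _ e0) Hg.
near=> x.
have h1 : `|f x| < `|g0| / 2 by rewrite -normrN -sub0r; near: x.
have h2 : `|g0 - g x| < `|g0| / 2 by near: x.
have h3 : `|g0| <= `|g0 - g x| + `|g x|.
  by have := ler_distD (g x) g0 0; rewrite !subr0.
have h4 : `|g0| < `|g0| / 2 + `|g x|.
  by apply: (le_lt_trans h3); rewrite ltrD2r.
have h5 : `|g0| / 2 < `|g x|.
  by move: h4; rewrite -ltrBlDl {1}(splitr `|g0|) addrK.
exact: (lt_trans h1 h5).
Unshelve. all: by end_near.
Qed.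

Lemma pos_lb_fin (I : finType) (f : I -> C) :
  (forall i, 0 < f i) -> exists e : C, 0 < e /\ forall i, e <= f i.
Proof.
move=> Hf.
have Hs : 0 <= \sum_i (f i)^-1 by apply: sumr_ge0 => i _; rewrite invr_ge0 ltW.
have Hp : 0 < 1 + \sum_i (f i)^-1 by rewrite ltr_wpDr.
exists (1 + \sum_i (f i)^-1)^-1; split; first by rewrite invr_gt0.
move=> i; rewrite -[f i]invrK lef_pV2 ?posrE ?invr_gt0 //.
rewrite (bigD1 i) //= addrCA lerDl.
by rewrite addr_ge0 //; apply: sumr_ge0 => j _; rewrite invr_ge0 ltW.
Qed.

Lemma pos_lb2 (e1 e2 : C) : 0 < e1 -> 0 < e2 ->
  exists e : C, [/\ 0 < e, e <= e1 & e <= e2].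
Proof.
move=> h1 h2.
have [e [e0 He]] : exists e : C, 0 < e /\ forall b : bool, e <= (if b then e1 else e2).
  by apply: pos_lb_fin => -[].
by exists e; split => //; [exact: (He true) | exact: (He false)].
Qed.

Lemma cvg_horner (T : Type) (F : set_system T) {FF : Filter F} (p : {poly C}) (f : T -> C) (a : C) :
  f x @[x --> F] --> a -> p.[f x] @[x --> F] --> p.[a].
Proof.
move=> Hf; elim/poly_ind: p => [|p c IH].
  rewrite horner0; under eq_fun do rewrite horner0; exact: cvg_cst.
rewrite hornerMXaddC; under eq_fun do rewrite hornerMXaddC.
exact: (cvgD (cvgM IH Hf) (cvg_cst (c:C))).
Qed.

End Lim.

Section Cint.
Variable R : realType.
Local Notation C := (R[i]).

Lemma mDdom (circ : option R) : measurable (Ddom circ : set (measurableTypeR R)).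
Proof. by case: circ => [L|] /=; [exact: measurable_itv | exact: measurableT]. Qed.

Definition cintegrable (circ : option R) (g : R -> C) : Prop :=
  (@lebesgue_measure R).-integrable (Ddom circ) (EFin \o (fun x => complex.Re (g x))) /\
  (@lebesgue_measure R).-integrable (Ddom circ) (EFin \o (fun x => complex.Im (g x))).

Lemma Re_add (a b : C) : complex.Re (a + b) = complex.Re a + complex.Re b.
Proof. by case: a; case: b. Qed.
Lemma Im_add (a b : C) : complex.Im (a + b) = complex.Im a + complex.Im b.
Proof. by case: a; case: b. Qed.
Lemma Re_mul (a b : C) : complex.Re (a * b) = complex.Re a * complex.Re b + (- complex.Im a) * complex.Im b.
Proof. by case: a => a1 a2; case: b => b1 b2 /=; rewrite mulNr. Qed.
Lemma Im_mul (a b : C) : complex.Im (a * b) = complex.Re a * complex.Im b + complex.Im a * complex.Re b.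
Proof. by case: a => a1 a2; case: b => b1 b2 /=. Qed.

Lemma integ_add (circ : option R) (F G : R -> R) :
  (@lebesgue_measure R).-integrable (Ddom circ) (EFin \o F) ->
  (@lebesgue_measure R).-integrable (Ddom circ) (EFin \o G) ->
  (@lebesgue_measure R).-integrable (Ddom circ) (EFin \o (fun x => F x + G x)).
Proof.
move=> hF hG.
have -> : (EFin \o (fun x => F x + G x)) = ((EFin \o F) \+ (EFin \o G))%E.
  by apply/funext => x /=; rewrite EFinD.
exact: (integrableD (mDdom circ) hF hG).
Qed.

Lemma integ_scale (circ : option R) (k : R) (F : R -> R) :
  (@lebesgue_measure R).-integrable (Ddom circ) (EFin \o F) ->
  (@lebesgue_measure R).-integrable (Ddom circ) (EFin \o (fun x => k * F x)).
Proof.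
move=> hF.
have -> : (EFin \o (fun x => k * F x)) = (fun x => k%:E * (EFin \o F) x)%E.
  by apply/funext => x /=; rewrite EFinM.
exact: (integrableZl (mDdom circ) k hF).
Qed.

Lemma cintegrable_add circ (f g : R -> C) :
  cintegrable circ f -> cintegrable circ g -> cintegrable circ (fun x => f x + g x).
Proof.
move=> [f1 f2] [g1 g2]; split.
  have -> : (fun x => complex.Re (f x + g x)) = (fun x => complex.Re (f x) + complex.Re (g x)).
    by apply/funext => x; rewrite Re_add.
  exact: integ_add.
have -> : (fun x => complex.Im (f x + g x)) = (fun x => complex.Im (f x) + complex.Im (g x)).
  by apply/funext => x; rewrite Im_add.
exact: integ_add.
Qed.

Lemma cint_add circ (f g : R -> C) :
  cintegrable circ f -> cintegrable circ g ->
  cint circ (fun x => f x + g x) = cint circ f + cint circ g.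
Proof.
move=> [f1 f2] [g1 g2]; rewrite /cint.
have -> : (fun x => complex.Re (f x + g x)) = (fun x => complex.Re (f x) + complex.Re (g x)).
  by apply/funext => x; rewrite Re_add.
have -> : (fun x => complex.Im (f x + g x)) = (fun x => complex.Im (f x) + complex.Im (g x)).
  by apply/funext => x; rewrite Im_add.
by rewrite !RintegralD //; exact: mDdom.
Qed.

Lemma cintegrable_scale circ (c : C) (f : R -> C) :
  cintegrable circ f -> cintegrable circ (fun x => c * f x).
Proof.
move=> [f1 f2]; split.
  have -> : (fun x => complex.Re (c * f x)) = (fun x => complex.Re c * complex.Re (f x) + (- complex.Im c) * complex.Im (f x)).
    by apply/funext => x; rewrite Re_mul.
  by apply: integ_add; apply: integ_scale.
have -> : (fun x => complex.Im (c * f x)) = (fun x => complex.Re c * complex.Im (f x) + complex.Im c * complex.Re (f x)).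
  by apply/funext => x; rewrite Im_mul.
by apply: integ_add; apply: integ_scale.
Qed.

Lemma cint_scale circ (c : C) (f : R -> C) :
  cintegrable circ f -> cint circ (fun x => c * f x) = c * cint circ f.
Proof.
move=> [f1 f2]; rewrite /cint.
have -> : (fun x => complex.Re (c * f x)) = (fun x => complex.Re c * complex.Re (f x) + (- complex.Im c) * complex.Im (f x)).
  by apply/funext => x; rewrite Re_mul.
have -> : (fun x => complex.Im (c * f x)) = (fun x => complex.Re c * complex.Im (f x) + complex.Im c * complex.Re (f x)).
  by apply/funext => x; rewrite Im_mul.
have mD := mDdom circ.
rewrite !RintegralD //; try by apply: integ_scale.
rewrite !RintegralZl //.
by case: c => c1 c2 /=; rewrite mulNr.
Qed.

Lemma cint0 (circ : option R) : cint circ (fun _ => 0) = 0.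
Proof.
rewrite /cint /= !Rintegral_cst ?mul0r //; exact: mDdom.
Qed.

Lemma cintegrable0 (circ : option R) : cintegrable circ (fun _ => 0).
Proof. by split => /=; exact: integrable0. Qed.

Lemma cintegrable_sum circ (I : Type) (r : seq I) (g : I -> R -> C) :
  (forall i, cintegrable circ (g i)) -> cintegrable circ (fun x => \sum_(i <- r) g i x).
Proof.
move=> H; elim: r => [|i r IH].
  under eq_fun do rewrite big_nil; exact: cintegrable0.
under eq_fun do rewrite big_cons; exact: cintegrable_add.
Qed.

Lemma cint_sum circ (I : Type) (r : seq I) (g : I -> R -> C) :
  (forall i, cintegrable circ (g i)) ->
  cint circ (fun x => \sum_(i <- r) g i x) = \sum_(i <- r) cint circ (g i).
Proof.
move=> H; elim: r => [|i r IH].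
  under eq_fun do rewrite big_nil; by rewrite big_nil cint0.
under eq_fun do rewrite big_cons.
by rewrite big_cons cint_add ?IH //; exact: cintegrable_sum.
Qed.

End Cint.

Section Kappa.
Variable R : realType.
Local Notation C := (R[i]).
Variable n : nat.
Variable f : 'I_n -> 'I_n -> 'I_n -> C.

Lemma ad_add (u v : 'rV[C]_n) : ad f (u + v) = ad f u + ad f v.
Proof.
apply/matrixP => b c; rewrite !mxE -big_split /=; apply: eq_bigr => a _.
by rewrite !mxE mulrDl.
Qed.

Lemma ad_scale (k : C) (u : 'rV[C]_n) : ad f (k *: u) = k *: ad f u.
Proof.
apply/matrixP => b c; rewrite !mxE mulr_sumr; apply: eq_bigr => a _.
by rewrite !mxE mulrA.
Qed.

Lemma kappa_addl u v w : kappa f (u + v) w = kappa f u w + kappa f v w.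
Proof. by rewrite /kappa /killing ad_add mulmxDl mxtraceD opprD. Qed.

Lemma kappa_addr u v w : kappa f w (u + v) = kappa f w u + kappa f w v.
Proof. by rewrite /kappa /killing ad_add mulmxDr mxtraceD opprD. Qed.

Lemma kappa_scalel k u w : kappa f (k *: u) w = k * kappa f u w.
Proof. by rewrite /kappa /killing ad_scale -scalemxAl mxtraceZ mulrN. Qed.

Lemma kappa_scaler k u w : kappa f w (k *: u) = k * kappa f w u.
Proof. by rewrite /kappa /killing ad_scale -scalemxAr mxtraceZ mulrN. Qed.

Lemma kappa_0l w : kappa f 0 w = 0.
Proof. by rewrite -(scale0r 0) kappa_scalel mul0r. Qed.

Lemma kappa_0r w : kappa f w 0 = 0.
Proof. by rewrite -(scale0r 0) kappa_scaler mul0r. Qed.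

Lemma kappa_suml (I : Type) (r : seq I) (u : I -> 'rV[C]_n) w :
  kappa f (\sum_(i <- r) u i) w = \sum_(i <- r) kappa f (u i) w.
Proof.
elim: r => [|i r IH]; first by rewrite !big_nil kappa_0l.
by rewrite !big_cons kappa_addl IH.
Qed.

Lemma kappa_sumr (I : Type) (r : seq I) (u : I -> 'rV[C]_n) w :
  kappa f w (\sum_(i <- r) u i) = \sum_(i <- r) kappa f w (u i).
Proof.
elim: r => [|i r IH]; first by rewrite !big_nil kappa_0r.
by rewrite !big_cons kappa_addr IH.
Qed.

End Kappa.

Section Model.
Variable R : realType.
Local Notation C := (R[i]).

Definition vof (S : finType) (z : S -> C) (w : C) : S -> C := fun a => (w - z a)^-1.

Definition Phi (S : finType) (m : S -> nat) (l : S -> nat -> C) (linf : R) (v : S -> C) : C :=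
  \sum_(a : S) \sum_(p < m a) l a p * v a ^+ p.+1 - RtoC linf.

Definition dPhi (S : finType) (m : S -> nat) (l : S -> nat -> C) (v : S -> C) : C :=
  \sum_(a : S) \sum_(p < m a) l a p * (- (p.+1)%:R * v a ^+ p.+2).

Definition Lx (n : nat) (S : finType) (m : S -> nat) (J : S -> nat -> R -> 'rV[C]_n)
  (v : S -> C) (x : R) : 'rV[C]_n :=
  \sum_(a : S) \sum_(p < m a) v a ^+ p.+1 *: J a p x.

Definition Quad (n : nat) (f : 'I_n -> 'I_n -> 'I_n -> C) (circ : option R)
  (S : finType) (m : S -> nat) (J : S -> nat -> R -> 'rV[C]_n) (v : S -> C) : C :=
  \sum_(a : S) \sum_(p < m a) \sum_(b : S) \sum_(q < m b)
    (v a ^+ p.+1 * v b ^+ q.+1) * cint circ (fun x => kappa f (J a p x) (J b q x)).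

Lemma twist_Phi (S : finType) (m : S -> nat) l z linf w :
  twist m l z linf w = Phi m l linf (vof z w).
Proof.
rewrite /twist /Phi; congr (_ - _); apply: eq_bigr => a _; apply: eq_bigr => p _.
by rewrite /vof exprVn.
Qed.

Lemma lax_Lx n (S : finType) (m : S -> nat) z (J : S -> nat -> R -> 'rV[C]_n) w x :
  lax m z J w x = Lx m J (vof z w) x.
Proof.
rewrite /lax /Lx; apply: eq_bigr => a _; apply: eq_bigr => p _.
by rewrite /vof exprVn.
Qed.

Lemma is_derive_term (l z x : C) (k : nat) : x != z ->
  is_derive x 1 (fun y : C => l * ((y - z)^-1)^+k) (l * (-(k%:R) * ((x - z)^-1)^+k.+1)).
Proof.
move=> xz.
have h1 : is_derive x (1:C) (fun y : C => y - z) 1.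
  have E : (fun y : C => y - z) = (id - cst z) :> (C -> C) by apply/funext.
  rewrite E.
  exact: (is_derive_eq (is_deriveB (is_derive_id x 1) (is_derive_cst z x 1)) (subr0 1)).
have xz0 : x - z != 0 by rewrite subr_eq0.
have d1 := @ex_derive _ _ _ _ _ _ _ h1.
have h2 : is_derive x (1:C) (fun y : C => (y - z)^-1) (- (x - z) ^- 2 *: 1).
  apply: DeriveDef.
    exact: (@derivableV _ _ (fun y : C => y - z) x 1 xz0 d1).
  rewrite (@deriveV _ _ (fun y : C => y - z) x 1 xz0 d1).
  by rewrite (@derive_val _ _ _ _ _ _ _ h1).
have h3 := is_deriveX k h2; rewrite exprfctE in h3.
have h4 := is_deriveZ l h3.
have E : (fun y : C => l * ((y - z)^-1)^+k) = (l \*: (fun y => (y - z)^-1 ^+ k)) by apply/funext.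
rewrite E; apply: (is_derive_eq h4).
have sc : forall a b : C, a *: b = a * b by [].
rewrite !sc !mulr1 -exprVn.
case: k {h3 h4 E} => [|k]; first by rewrite /= !(mul0r, mulr0, oppr0).
by rewrite /= mulrN mulNr -mulrA -exprD addn2.
Qed.

Lemma is_derive_sumseq (I : Type) (r : seq I) (h : I -> C -> C) (dh : I -> C) (x : C) :
  (forall i, is_derive x (1:C) (h i) (dh i)) ->
  is_derive x (1:C) (fun y => \sum_(i <- r) h i y) (\sum_(i <- r) dh i).
Proof.
move=> H; elim: r => [|i r IH].
  have E : (fun y => \sum_(i <- [::]) h i y) = cst 0 by apply/funext => y; rewrite big_nil.
  by rewrite E big_nil; exact: is_derive_cst.
have E : (fun y => \sum_(j <- i :: r) h j y) = (h i + (fun y => \sum_(j <- r) h j y)).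
  by apply/funext => y; rewrite big_cons.
by rewrite E big_cons; exact: (is_deriveD (H i) IH).
Qed.

Lemma derive_twist (S : finType) (m : S -> nat) l z linf (w : C) :
  (forall a, w != z a) ->
  derive1 (twist m l z linf) w = dPhi m l (vof z w).
Proof.
move=> Hw.
have E : twist m l z linf =
   (fun y => \sum_(a : S) \sum_(p < m a) l a p * ((y - z a)^-1)^+p.+1) - cst (RtoC linf).
  apply/funext => y; rewrite /twist /=; congr (_ - _).
  by apply: eq_bigr => a _; apply: eq_bigr => p _; rewrite exprVn.
have D : is_derive w (1:C) (twist m l z linf) (dPhi m l (vof z w)).
  have D1 : forall a, is_derive w (1:C) (fun y => \sum_(p < m a) l a p * ((y - z a)^-1)^+p.+1)
      (\sum_(p < m a) l a p * (-(p.+1%:R) * ((w - z a)^-1)^+p.+2)).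
    move=> a.
    exact: (@is_derive_sumseq _ _ (fun (p : 'I_(m a)) (y : C) => l a p * ((y - z a)^-1)^+p.+1)
              (fun p : 'I_(m a) => l a p * (-(p.+1%:R) * ((w - z a)^-1)^+p.+2)) w
              (fun p => is_derive_term (l a p) p.+1 (Hw a))).
  have D2 := @is_derive_sumseq _ (index_enum S)
      (fun a (y : C) => \sum_(p < m a) l a p * ((y - z a)^-1)^+p.+1) _ w D1.
  rewrite E; apply: (is_derive_eq (is_deriveB D2 (is_derive_cst (RtoC linf) w 1))).
  by rewrite subr0.
by rewrite derive1E (@derive_val _ _ _ _ _ _ _ D).
Qed.

Lemma kappa_Lx n (f : 'I_n -> 'I_n -> 'I_n -> C) (S : finType) (m : S -> nat)
  (J : S -> nat -> R -> 'rV[C]_n) v x :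
  kappa f (Lx m J v x) (Lx m J v x) =
  \sum_(a : S) \sum_(p < m a) \sum_(b : S) \sum_(q < m b)
    (v a ^+ p.+1 * v b ^+ q.+1) * kappa f (J a p x) (J b q x).
Proof.
rewrite /Lx kappa_suml; apply: eq_bigr => a _.
rewrite kappa_suml; apply: eq_bigr => p _.
rewrite kappa_scalel kappa_sumr mulr_sumr; apply: eq_bigr => b _.
rewrite kappa_sumr mulr_sumr; apply: eq_bigr => q _.
by rewrite kappa_scaler mulrA.
Qed.

Lemma cint_Lx n (f : 'I_n -> 'I_n -> 'I_n -> C) (circ : option R) (S : finType) (m : S -> nat)
  (J : S -> nat -> R -> 'rV[C]_n) v :
  (forall a b p q, (p < m a)%N -> (q < m b)%N ->
     cintegrable circ (fun x => kappa f (J a p x) (J b q x))) ->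
  cint circ (fun x => kappa f (Lx m J v x) (Lx m J v x)) = Quad f circ m J v.
Proof.
move=> Hi.
under eq_fun do rewrite kappa_Lx.
rewrite /Quad.
have Hq : forall a (p : 'I_(m a)) b (q : 'I_(m b)),
   cintegrable circ (fun x => (v a ^+ p.+1 * v b ^+ q.+1) * kappa f (J a p x) (J b q x)).
  by move=> a p b q; apply: cintegrable_scale; apply: Hi.
rewrite cint_sum; last first.
  move=> a; apply: cintegrable_sum => p; apply: cintegrable_sum => b.
  by apply: cintegrable_sum => q.
apply: eq_bigr => a _; rewrite cint_sum; last first.
  by move=> p; apply: cintegrable_sum => b; apply: cintegrable_sum => q.
apply: eq_bigr => p _; rewrite cint_sum; last by move=> b; apply: cintegrable_sum => q.
apply: eq_bigr => b _; rewrite cint_sum //.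
apply: eq_bigr => q _; rewrite cint_scale //; exact: Hi.
Qed.

Lemma charge_eq n (f : 'I_n -> 'I_n -> 'I_n -> C) (circ : option R) (S : finType) (m : S -> nat)
  l z linf (J : S -> nat -> R -> 'rV[C]_n) w :
  (forall a, w != z a) ->
  (forall a b p q, (p < m a)%N -> (q < m b)%N ->
     cintegrable circ (fun x => kappa f (J a p x) (J b q x))) ->
  Defs.charge f circ m l z linf J w = - (2 * dPhi m l (vof z w))^-1 * Quad f circ m J (vof z w).
Proof.
move=> Hw Hi; rewrite /Defs.charge derive_twist //; congr (_ * _).
under eq_fun do rewrite lax_Lx.
exact: cint_Lx.
Qed.

Lemma cvg_Phi (T : Type) (F : set_system T) {FF : Filter F} (S : finType) (m : S -> nat) l linf
  (v : T -> S -> C) (v0 : S -> C) :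
  (forall a, v x a @[x --> F] --> v0 a) ->
  Phi m l linf (v x) @[x --> F] --> Phi m l linf v0.
Proof.
move=> Hv; rewrite /Phi.
apply: (cvgB _ (cvg_cst (RtoC linf : C))).
apply: cvg_sum_seq => a; apply: cvg_sum_seq => p.
exact: (cvgM (cvg_cst (l a p : C)) (cvgXn (Hv a))).
Qed.

Lemma cvg_dPhi (T : Type) (F : set_system T) {FF : Filter F} (S : finType) (m : S -> nat) l
  (v : T -> S -> C) (v0 : S -> C) :
  (forall a, v x a @[x --> F] --> v0 a) ->
  dPhi m l (v x) @[x --> F] --> dPhi m l v0.
Proof.
move=> Hv; rewrite /dPhi.
apply: cvg_sum_seq => a; apply: cvg_sum_seq => p.
exact: (cvgM (cvg_cst (l a p : C)) (cvgM (cvg_cst (- (p.+1)%:R : C)) (cvgXn (Hv a)))).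
Qed.

Lemma cvg_Quad (T : Type) (F : set_system T) {FF : Filter F} n (f : 'I_n -> 'I_n -> 'I_n -> C)
  circ (S : finType) (m : S -> nat) J (v : T -> S -> C) (v0 : S -> C) :
  (forall a, v x a @[x --> F] --> v0 a) ->
  Quad f circ m J (v x) @[x --> F] --> Quad f circ m J v0.
Proof.
move=> Hv; rewrite /Quad.
apply: cvg_sum_seq => a; apply: cvg_sum_seq => p.
apply: cvg_sum_seq => b; apply: cvg_sum_seq => q.
exact: (cvgM (cvgM (cvgXn (Hv a)) (cvgXn (Hv b))) (cvg_cst _)).
Qed.

End Model.

Section Poly.
Variable R : realType.
Local Notation C := (R[i]).
Variable S : finType.
Variables (m : S -> nat) (l : S -> nat -> C) (z : S -> C) (linf : R).

Definition Qp : {poly C} := \prod_(a : S) ('X - (z a)%:P)^+(m a).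
Definition Lp : {poly C} := \sum_(a : S) \sum_(p < m a)
   (l a p)%:P * (('X - (z a)%:P)^+(m a - p.+1) * \prod_(b | b != a) ('X - (z b)%:P)^+(m b)).
Definition Pp : {poly C} := Lp - (RtoC linf)%:P * Qp.

Lemma hornerQ w : Qp.[w] = \prod_(a : S) (w - z a)^+(m a).
Proof. by rewrite /Qp horner_prod; apply: eq_bigr => a _; rewrite horner_exp hornerXsubC. Qed.

Lemma hornerQ_neq0 w : (forall a, w != z a) -> Qp.[w] != 0.
Proof.
move=> Hw; rewrite hornerQ; apply/prodf_neq0 => a _.
by rewrite expf_neq0 // subr_eq0.
Qed.

Lemma hornerP w : (forall a, w != z a) -> Pp.[w] = twist m l z linf w * Qp.[w].
Proof.
move=> Hw.
rewrite /Pp /Lp /twist hornerD hornerN hornerM hornerC mulrBl; congr (_ - _).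
rewrite horner_sum mulr_suml; apply: eq_bigr => a _.
rewrite horner_sum mulr_suml; apply: eq_bigr => p _.
rewrite hornerM hornerC hornerM horner_exp hornerXsubC horner_prod hornerQ.
rewrite (eq_bigr (fun b => (w - z b) ^+ m b)); last by move=> b _; rewrite horner_exp hornerXsubC.
rewrite [in RHS](bigD1 a) //=.
have pm : (p.+1 <= m a)%N by exact: ltn_ord.
have un : (w - z a) ^+ p.+1 != 0 by rewrite expf_neq0 // subr_eq0.
rewrite [(w - z a) ^+ m a](_ : _ = (w - z a)^+p.+1 * (w - z a)^+(m a - p.+1)); last first.
  by rewrite -exprD subnKC.
by rewrite !mulrA mulfVK.
Qed.

Lemma size_prod_mon (r : seq S) (P : pred S) :
  size (\prod_(b <- r | P b) ('X - (z b)%:P)^+(m b)) = (\sum_(b <- r | P b) m b)%N.+1 /\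
  \prod_(b <- r | P b) ('X - (z b)%:P)^+(m b) \is monic.
Proof.
elim: r => [|b r [IH1 IH2]]; first by rewrite !big_nil size_poly1 monic1.
rewrite !big_cons; case: (P b) => //.
have mb : ('X - (z b)%:P)^+(m b) \is monic by rewrite monic_exp // monicXsubC.
split; last by rewrite rpredM.
by rewrite size_Mmonic ?monic_neq0 // size_exp_XsubC IH1 addSn addnS.
Qed.

Lemma size_Qp : size Qp = (nsum m).+1.
Proof. by have [-> _] := size_prod_mon (index_enum S) predT. Qed.

Lemma monic_Qp : Qp \is monic.
Proof. by have [_ ->] := size_prod_mon (index_enum S) predT. Qed.

Lemma size_Lp : (size Lp <= nsum m)%N.
Proof.
rewrite /Lp; apply: (big_ind (fun q : {poly C} => (size q <= nsum m)%N)).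
- by rewrite size_poly0.
- by move=> p q hp hq; apply: (leq_trans (size_polyD _ _)); rewrite geq_max hp hq.
move=> a _.
apply: (big_ind (fun q : {poly C} => (size q <= nsum m)%N)).
- by rewrite size_poly0.
- by move=> p q hp hq; apply: (leq_trans (size_polyD _ _)); rewrite geq_max hp hq.
move=> p _.
have [s1 _] := size_prod_mon (index_enum S) (fun b => b != a).
apply: (leq_trans (size_polyMleq _ _)).
have h1 := size_polyC_leq1 (l a p).
have h2 := size_polyMleq (('X - (z a)%:P) ^+ (m a - p.+1)) (\prod_(b | b != a) ('X - (z b)%:P) ^+ m b).
rewrite size_exp_XsubC s1 in h2.
have hn : nsum m = (m a + \sum_(b | b != a) m b)%N by rewrite /nsum (bigD1 a).
have pm : (p < m a)%N by exact: ltn_ord.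
rewrite hn.
set s := (\sum_(b | b != a) m b)%N in h2 *.
move: h1 h2 pm.
move: (size (l a p)%:P) (size (('X - (z a)%:P) ^+ (m a - p.+1) * \prod_(b | b != a) ('X - (z b)%:P) ^+ m b)) => x y.
lia.
Qed.

Lemma size_Pp : linf != 0 -> size Pp = (nsum m).+1 /\ lead_coef Pp = - RtoC linf.
Proof.
move=> hl.
have c0 : RtoC linf != 0 by rewrite RtoC_eq0.
have hs : size ((RtoC linf)%:P * Qp) = (nsum m).+1 by rewrite size_Cmul // size_Qp.
have hlt : (size Lp < size (- ((RtoC linf)%:P * Qp)))%N.
  by rewrite size_polyN hs ltnS size_Lp.
rewrite /Pp addrC; split; first by rewrite size_polyDl // size_polyN.
rewrite lead_coefDl // lead_coefN lead_coef_Mmonic ?monic_Qp //.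
by rewrite lead_coefC.
Qed.

Lemma factor_Pp : linf != 0 ->
  exists rs : seq C, Pp = (- RtoC linf) *: \prod_(r <- rs) ('X - r%:P) /\ size rs = nsum m.
Proof.
move=> hl; have [hs hc] := size_Pp hl.
have [rs Hrs] := closed_field_poly_normal Pp.
exists rs; rewrite -hc; split => //.
have c0 : lead_coef Pp != 0 by rewrite hc oppr_eq0 RtoC_eq0.
move: hs; rewrite {1}Hrs size_scale // size_prod_XsubC.
by case.
Qed.

End Poly.

Section Count.
Variable R : realType.
Local Notation C := (R[i]).

Lemma counting_roots (N : nat) (rs : seq C) (T : 'I_N -> C) (d : C) :
  size rs = N ->
  (forall i j w, `|w - T i| < d -> `|w - T j| < d -> i = j) ->
  (forall i, exists r, r \in rs /\ `|r - T i| < d) ->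
  [/\ uniq rs, (forall r, r \in rs -> exists i, `|r - T i| < d) &
      (forall i r r', r \in rs -> r' \in rs -> `|r - T i| < d -> `|r' - T i| < d -> r = r')].
Proof.
move=> Hsz Hdisj Hex.
have [ch Hch] := boolp.choice Hex.
have inj : injective ch.
  move=> i j Eij; apply: (Hdisj i j (ch i)); first by case: (Hch i).
  by rewrite Eij; case: (Hch j).
set s1 := [seq ch i | i <- enum 'I_N].
have u1 : uniq s1 by rewrite map_inj_uniq // enum_uniq.
have sub1 : {subset s1 <= rs} by move=> r /mapP [i _ ->]; case: (Hch i).
have sz1 : size s1 = N by rewrite size_map size_enum_ord.
have [_ E] := uniq_min_size u1 sub1 (eq_leq (etrans Hsz (esym sz1))).
have urs : uniq rs by rewrite (uniq_size_uniq u1 E) sz1 Hsz.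
have memrs : forall r, r \in rs -> exists i, r = ch i.
  by move=> r; rewrite -E => /mapP [i _ ->]; exists i.
split => //.
  by move=> r /memrs [i ->]; exists i; case: (Hch i).
move=> i r r' /memrs [j ->] /memrs [k ->] h1 h2.
have hj : `|ch j - T j| < d by case: (Hch j).
have hk : `|ch k - T k| < d by case: (Hch k).
have e1 := Hdisj _ _ _ h1 hj; have e2 := Hdisj _ _ _ h2 hk.
by rewrite -e1 -e2.
Qed.

Lemma prod_ineq (rs : seq C) (t t' d : C) : 0 <= d ->
  (forall r, r \in rs -> d <= `|t - r|) ->
  d ^+ (size rs) * \prod_(r <- rs) `|t' - r| <= \prod_(r <- rs) `|t - r| * (d + `|t - t'|) ^+ (size rs).
Proof.
move=> d0; elim: rs => [|r rs IH] H; first by rewrite !big_nil !expr0 mul1r.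
rewrite !big_cons /= !exprS.
have Hr : d <= `|t - r| by apply: H; rewrite mem_head.
have IH' : d ^+ size rs * \prod_(r <- rs) `|t' - r| <= \prod_(r <- rs) `|t - r| * (d + `|t - t'|) ^+ size rs.
  by apply: IH => x hx; apply: H; rewrite in_cons hx orbT.
rewrite mulrACA [X in _ <= X]mulrACA.
apply: ler_pM.
- by rewrite mulr_ge0.
- by rewrite mulr_ge0 ?exprn_ge0 //; apply: prodr_ge0 => x _.
- have h1 : `|t' - r| <= `|t - r| + `|t - t'|.
    rewrite [X in _ <= X]addrC (distrC t t'); exact: ler_distD.
  apply: (le_trans (ler_wpM2l d0 h1)).
  rewrite mulrDr [X in _ <= X]mulrDr [X in _ <= X + _]mulrC.
  rewrite lerD2l ler_wpM2r //.
- exact: IH'.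
Qed.

Lemma root_near (rs : seq C) (t t' d : C) : 0 < d ->
  \prod_(r <- rs) `|t - r| * (d + `|t - t'|) ^+ (size rs) <
     d ^+ (size rs) * \prod_(r <- rs) `|t' - r| ->
  exists r, r \in rs /\ `|r - t| < d.
Proof.
move=> d0 Hlt.
apply: contrapT => Hn.
have H : forall r, r \in rs -> d <= `|t - r|.
  move=> r hr; rewrite (real_leNgt (gtr0_real d0) (normr_real _)).
  by apply/negP => h; apply: Hn; exists r; rewrite distrC.

have := @prod_ineq rs t t' d (ltW d0) H.
by move=> /(lt_le_trans Hlt); rewrite ltxx.
Qed.

End Count.

Section Simple.
Variable R : realType.
Local Notation C := (R[i]).

Lemma cvg_shift (r0 : C) : (h + r0) @[h --> (0:C)^'] --> r0.
Proof.
have H0 : (fun h : C => h) @ (0:C)^' --> (0:C) by apply: cvg_within.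
rewrite -[X in _ --> X](add0r r0).
exact: (cvgD H0 (cvg_cst r0)).
Qed.

Lemma ev_nonpole (S : finType) (z : S -> C) (r0 : C) :
  (forall a, r0 != z a) -> \forall h \near (0:C)^', forall a, h + r0 != z a.
Proof.
move=> Hr; apply: filter_forall => a.
have e0 : 0 < `|r0 - z a| by rewrite normr_gt0 subr_eq0.
have Hc := @cvg_shift r0.
move/cvgrPdist_lt : Hc => /(_ _ e0).
apply: filterS => h hh; apply/eqP => E; move: hh; rewrite E ltxx.
by [].
Qed.

Variable S : finType.
Variables (m : S -> nat) (l : S -> nat -> C) (z : S -> C) (linf : R).

Lemma derive_simple_root (rs : seq C) (c r0 : C) :
  Pp m l z linf = c *: \prod_(x <- rs) ('X - x%:P) -> c != 0 -> uniq rs -> r0 \in rs ->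
  (forall a, r0 != z a) -> derive1 (twist m l z linf) r0 != 0.
Proof.
move=> HPc c0 urs Hr0 Hpole.
pose Sp : {poly C} := c *: \prod_(x <- rem r0 rs) ('X - x%:P).
have HP : Pp m l z linf = ('X - r0%:P) * Sp.
  by rewrite HPc (perm_big _ (perm_to_rem Hr0)) big_cons /Sp scalerAr.
have HS : Sp.[r0] != 0.
  rewrite /Sp hornerZ horner_prod mulf_neq0 // prodf_seq_neq0; apply/allP => x hx /=.
  rewrite hornerXsubC subr_eq0; apply/eqP => E; rewrite -E mem_rem_uniqF // in hx.
have HQ : (Qp m z).[r0] != 0 := hornerQ_neq0 m Hpole.
have Ht0 : twist m l z linf r0 = 0.
  have := hornerP m l linf Hpole; rewrite HP hornerM hornerXsubC subrr mul0r.
  by move/esym/eqP; rewrite mulf_eq0 (negbTE HQ) orbF => /eqP.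
have E : {near (0:C)^', (fun h => Sp.[h + r0] / (Qp m z).[h + r0]) =1
           (fun h => h^-1 *: (twist m l z linf (h + r0) - twist m l z linf r0))}.
  near=> h.
  have hn0 : h != 0 by near: h; exact: nbhs_dnbhs_neq.
  have hp : forall a, h + r0 != z a by near: h; exact: ev_nonpole.
  have HQh := hornerQ_neq0 m hp.
  have Ht : twist m l z linf (h + r0) = (Pp m l z linf).[h + r0] / (Qp m z).[h + r0].
    by rewrite (hornerP m l linf hp) mulfK.
  rewrite Ht Ht0 subr0 HP hornerM hornerXsubC addrK.
  have sc : forall a b : C, a *: b = a * b by [].
  by rewrite sc -mulrA mulKf.
have Hq : (h^-1 *: (twist m l z linf (h + r0) - twist m l z linf r0)) @[h --> (0:C)^'] -->
            Sp.[r0] / (Qp m z).[r0].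
  apply: (cvg_trans (near_eq_cvg E)).
  exact: (cvgM (cvg_horner (p:=Sp) (@cvg_shift r0)) (cvgV HQ (cvg_horner (p:=Qp m z) (@cvg_shift r0)))).
rewrite /derive1 (cvg_lim (@norm_hausdorff _ _) Hq).
by rewrite mulf_neq0 // invr_eq0.
Unshelve. all: by end_near.
Qed.

End Simple.

Section Gen.
Variable R : realType.
Local Notation C := (R[i]).

Lemma charge_lim n (f : 'I_n -> 'I_n -> 'I_n -> C) (circ : option R) (linf : R)
  (S : finType) (m : S -> nat) (l : S -> nat -> C) (zc : R -> S -> C)
  (J : S -> nat -> R -> 'rV[C]_n) (zg : R -> C) (v0 : S -> C) :
  (forall a b p q, (p < m a)%N -> (q < m b)%N ->
     cintegrable circ (fun x => kappa f (J a p x) (J b q x))) ->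
  (\forall g \near (0:R)^', forall s, zg g != zc g s) ->
  (forall s, vof (zc g) (zg g) s @[g --> (0:R)^'] --> v0 s) ->
  dPhi m l v0 != 0 ->
  Defs.charge f circ m l (zc g) linf J (zg g) @[g --> (0:R)^'] -->
     - (2 * dPhi m l v0)^-1 * Quad f circ m J v0.
Proof.
move=> Hi Hnp Hv Hd.
have E : {near (0:R)^', (fun g => - (2 * dPhi m l (vof (zc g) (zg g)))^-1 * Quad f circ m J (vof (zc g) (zg g))) =1
            (fun g => Defs.charge f circ m l (zc g) linf J (zg g))}.
  near=> g; rewrite charge_eq //; near: g; exact: Hnp.
apply: (cvg_trans (near_eq_cvg E)).
have H2 : 2 * dPhi m l v0 != 0 by rewrite mulf_neq0 // pnatr_eq0.
have Hd2 : (2 * dPhi m l (vof (zc g) (zg g))) @[g --> (0:R)^'] --> 2 * dPhi m l v0.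
  exact: (cvgM (cvg_cst (2:C)) (cvg_dPhi (m:=m) (l:=l) Hv)).
exact: (cvgM (cvgN (cvgV H2 Hd2)) (cvg_Quad (f:=f) (circ:=circ) (m:=m) (J:=J) Hv)).
Unshelve. all: by end_near.
Qed.

Lemma sum_idx_l (M1 M2 : nat) (X : Type) (e1 : 'I_M1 -> X) (e2 : 'I_M2 -> X) i :
  sum_idx e1 e2 (lshift M2 i) = e1 i.
Proof. by rewrite /sum_idx (unsplitK (inl i : 'I_M1 + 'I_M2)). Qed.

Lemma sum_idx_r (M1 M2 : nat) (X : Type) (e1 : 'I_M1 -> X) (e2 : 'I_M2 -> X) j :
  sum_idx e1 e2 (rshift M1 j) = e2 j.
Proof. by rewrite /sum_idx (unsplitK (inr j : 'I_M1 + 'I_M2)). Qed.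

Variables (S1 S2 : finType).

Lemma nsum_sumf (m1 : S1 -> nat) (m2 : S2 -> nat) : nsum (sumf m1 m2) = (nsum m1 + nsum m2)%N.
Proof. by rewrite /nsum big_sumType. Qed.

Lemma Phi_l (m1 : S1 -> nat) (m2 : S2 -> nat) l1 l2 linf (v1 : S1 -> C) :
  Phi (sumf m1 m2) (sumf l1 l2) linf (sumf v1 (fun _ => 0)) = Phi m1 l1 linf v1.
Proof.
rewrite /Phi big_sumType /=; congr (_ - _).
rewrite [X in _ + X]big1 ?addr0 // => b _; apply: big1 => p _.
by rewrite expr0n mulr0.
Qed.

Lemma Phi_r (m1 : S1 -> nat) (m2 : S2 -> nat) l1 l2 linf (v2 : S2 -> C) :
  Phi (sumf m1 m2) (sumf l1 l2) linf (sumf (fun _ => 0) v2) = Phi m2 l2 linf v2.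
Proof.
rewrite /Phi big_sumType /=; congr (_ - _).
rewrite [X in X + _]big1 ?add0r // => b _; apply: big1 => p _.
by rewrite expr0n mulr0.
Qed.

Lemma dPhi_l (m1 : S1 -> nat) (m2 : S2 -> nat) l1 l2 (v1 : S1 -> C) :
  dPhi (sumf m1 m2) (sumf l1 l2) (sumf v1 (fun _ => 0)) = dPhi m1 l1 v1.
Proof.
rewrite /dPhi big_sumType /=.
rewrite [X in _ + X]big1 ?addr0 // => b _; apply: big1 => p _.
by rewrite expr0n !mulr0.
Qed.

Lemma dPhi_r (m1 : S1 -> nat) (m2 : S2 -> nat) l1 l2 (v2 : S2 -> C) :
  dPhi (sumf m1 m2) (sumf l1 l2) (sumf (fun _ => 0) v2) = dPhi m2 l2 v2.
Proof.
rewrite /dPhi big_sumType /=.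
rewrite [X in X + _]big1 ?add0r // => b _; apply: big1 => p _.
by rewrite expr0n !mulr0.
Qed.

Lemma Quad_l n (f : 'I_n -> 'I_n -> 'I_n -> C) circ (m1 : S1 -> nat) (m2 : S2 -> nat) J1 J2 (v1 : S1 -> C) :
  Quad f circ (sumf m1 m2) (sumf J1 J2) (sumf v1 (fun _ => 0)) = Quad f circ m1 J1 v1.
Proof.
rewrite /Quad big_sumType /=.
rewrite [X in _ + X]big1 ?addr0; last first.
  move=> b _; apply: big1 => p _; apply: big1 => a _; apply: big1 => q _.
  by rewrite expr0n !mul0r.
apply: eq_bigr => a _; apply: eq_bigr => p _.
rewrite big_sumType /= [X in _ + X]big1 ?addr0 // => b _; apply: big1 => q _.
by rewrite expr0n mulr0 mul0r.
Qed.

Lemma Quad_r n (f : 'I_n -> 'I_n -> 'I_n -> C) circ (m1 : S1 -> nat) (m2 : S2 -> nat) J1 J2 (v2 : S2 -> C) :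
  Quad f circ (sumf m1 m2) (sumf J1 J2) (sumf (fun _ => 0) v2) = Quad f circ m2 J2 v2.
Proof.
rewrite /Quad big_sumType /=.
rewrite [X in X + _]big1 ?add0r; last first.
  move=> b _; apply: big1 => p _; apply: big1 => a _; apply: big1 => q _.
  by rewrite expr0n !mul0r.
apply: eq_bigr => a _; apply: eq_bigr => p _.
rewrite big_sumType /= [X in X + _]big1 ?add0r // => b _; apply: big1 => q _.
by rewrite expr0n mulr0 mul0r.
Qed.

Lemma vlim_l (z1 : S1 -> C) (z2 : S2 -> C) (zg : R -> C) (p : C) :
  zg g @[g --> (0:R)^'] --> p -> (forall a, p != z1 a) ->
  forall s, vof (cpos z1 z2 g) (zg g) s @[g --> (0:R)^'] --> sumf (vof z1 p) (fun _ => 0) s.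
Proof.
move=> Hz Hp [a|b] /=; rewrite /vof /=.
  have H0 : p - z1 a != 0 by rewrite subr_eq0.
  exact: (cvgV H0 (cvgB Hz (cvg_cst (z1 a)))).
under eq_fun do rewrite opprD addrA.
exact: (inv_minus_h (cvgB Hz (cvg_cst (z2 b)))).
Qed.

Lemma vlim_r (z1 : S1 -> C) (z2 : S2 -> C) (zg : R -> C) (p : C) :
  (zg g - RtoC g^-1) @[g --> (0:R)^'] --> p -> (forall b, p != z2 b) ->
  forall s, vof (cpos z1 z2 g) (zg g) s @[g --> (0:R)^'] --> sumf (fun _ => 0) (vof z2 p) s.
Proof.
move=> Hz Hp [a|b] /=; rewrite /vof /=.
  have E : forall g, zg g - z1 a = (zg g - RtoC g^-1 - z1 a) + RtoC g^-1.
    by move=> g; rewrite addrAC subrK.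
  under eq_fun do rewrite E.
  exact: (inv_plus_h (cvgB Hz (cvg_cst (z1 a)))).
have H0 : p - z2 b != 0 by rewrite subr_eq0.
have E : forall g, zg g - (z2 b + RtoC g^-1) = (zg g - RtoC g^-1) - z2 b.
  by move=> g; rewrite opprD addrA addrAC.
under eq_fun do rewrite E.
exact: (cvgV H0 (cvgB Hz (cvg_cst (z2 b)))).
Qed.

End Gen.

Section Aux.
Variable R : realType.
Local Notation C := (R[i]).

Lemma near0_of (P : R -> Prop) :
  (exists2 d : R, 0 < d & forall g, 0 < `|g| < d -> P g) -> \forall g \near (0:R)^', P g.
Proof.
move=> [d d0 H].
have Hid : (fun g : R => g) @ (0:R)^' --> (0:R) by apply: cvg_within.
move/cvgrPdist_lt : Hid => /(_ _ d0) Hid.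
near=> g; apply: H.
have gn0 : g != 0 by near: g; exact: nbhs_dnbhs_neq.
have gd : `|0 - g| < d by near: g.
by rewrite normr_gt0 gn0 /=; rewrite sub0r normrN in gd.
Unshelve. all: by end_near.
Qed.

Lemma ball_of_near (P : R -> Prop) :
  (\forall g \near (0:R)^', P g) -> exists2 d : R, 0 < d & forall g, 0 < `|g| < d -> P g.
Proof.
move=> H.
have : nbhs (0:R) (fun g => g != 0 -> P g) by exact: H.
move/nbhs_ballP => [d d0 Hd]; exists d => // g /andP [g0 gd].
apply: Hd; last by rewrite -normr_gt0.
by rewrite -ball_normE /ball_ /= sub0r normrN.
Qed.

Lemma exists_notin (s : seq C) : exists x : C, x \notin s.
Proof.
apply: contrapT => Hn.
have Hs : {subset [seq (k%:R : C) | k <- iota 0 (size s).+1] <= s}.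
  move=> x _; apply: contrapT => hx; apply: Hn; exists x; exact/negP.
have u : uniq [seq (k%:R : C) | k <- iota 0 (size s).+1].
  rewrite map_inj_uniq ?iota_uniq // => a b /eqP; rewrite eqr_nat => /eqP.
  by [].
have := uniq_leq_size u Hs; rewrite size_map size_iota ltnn.
by [].
Qed.

Lemma exists_tau (S : finType) (m : S -> nat) (l : S -> nat -> C) (z : S -> C) (linf : R)
  (M : nat) (zeta : 'I_M -> C) :
  simple_zero_enum (twist m l z linf) (range z) zeta ->
  exists tau, (forall a, tau != z a) /\ twist m l z linf tau != 0.
Proof.
move=> [_ _ Hc].
have [x hx] := exists_notin ([seq z a | a <- enum S] ++ [seq zeta i | i <- enum 'I_M]).
have np : forall a, x != z a.
  move=> a; apply/eqP => E; move: hx; rewrite mem_cat E.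
  by rewrite map_f ?mem_enum.
exists x; split => //; apply/eqP => E.
have nr : ~ range z x by move=> [a _ Ea]; move: (np a); rewrite Ea eqxx.
have [i Ei] := Hc x nr E.
by move: hx; rewrite mem_cat Ei [X in _ || X]map_f ?mem_enum ?orbT.
Qed.

Lemma ev_far (c K : C) : 0 < K -> \forall g \near (0:R)^', K <= `|c - RtoC g^-1|.
Proof.
move=> K0.
have H0 : (fun _ : R => c) @ (0:R)^' --> c by apply: cvg_cst.
have H1 := inv_minus_h H0.
have Hk : 0 < K^-1 by rewrite invr_gt0.
move/cvgrPdist_lt : H1 => /(_ _ Hk) H1.
have H2 := ev_minus_h_neq0 H0.
near=> g.
have n0 : c - RtoC g^-1 != 0 by near: g.
have hlt : `|0 - (c - RtoC g^-1)^-1| < K^-1 by near: g.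
rewrite sub0r normrN normfV ltf_pV2 ?posrE ?normr_gt0 // in hlt.
exact: ltW.
Unshelve. all: by end_near.
Qed.

Lemma ev_far_plus (c K : C) : 0 < K -> \forall g \near (0:R)^', K <= `|c + RtoC g^-1|.
Proof.
move=> K0; apply: filterS (ev_far (- c) K0) => g.
by rewrite -opprD normrN.
Qed.

Lemma root_mem (c : C) (rs : seq C) (w : C) :
  c != 0 -> root (c *: \prod_(r <- rs) ('X - r%:P)) w = (w \in rs).
Proof. by move=> c0; rewrite rootZ // root_prod_XsubC. Qed.

Lemma Q_ratio (S : finType) (m : S -> nat) (z : S -> C) (t t' : C) :
  (forall s, t' != z s) ->
  (Qp m z).[t] = (Qp m z).[t'] * \prod_(s : S) (1 + (t - t') * (t' - z s)^-1) ^+ (m s).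
Proof.
move=> Hn; rewrite !hornerQ -big_split /=; apply: eq_bigr => s _.
rewrite -exprMn; congr (_ ^+ _).
have n0 : t' - z s != 0 by rewrite subr_eq0.
rewrite mulrDr mulr1 mulrCA mulfV // mulr1.
ring.
Qed.

End Aux.

Section Main.
Variable R : realType.
Local Notation C := (R[i]).
Variables (linf : R) (S1 S2 : finType) (m1 : S1 -> nat) (m2 : S2 -> nat)
  (l1 : S1 -> nat -> C) (l2 : S2 -> nat -> C) (z1 : S1 -> C) (z2 : S2 -> C)
  (zeta1 : 'I_(nsum m1) -> C) (zeta2 : 'I_(nsum m2) -> C).
Hypothesis Hlinf : linf != 0.
Hypothesis Hz1 : simple_zero_enum (twist m1 l1 z1 linf) (range z1) zeta1.
Hypothesis Hz2 : simple_zero_enum (twist m2 l2 z2 linf) (range z2) zeta2.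

Local Notation M1 := (nsum m1).
Local Notation M2 := (nsum m2).
Local Notation mc := (sumf m1 m2).
Local Notation lc := (sumf l1 l2).
Local Notation wc g := (cpos z1 z2 g).

Definition Pc (g : R) : {poly C} := Pp mc lc (wc g) linf.
Definition Tg (g : R) : 'I_(M1 + M2) -> C := sum_idx zeta1 (fun j => zeta2 j + RtoC g^-1).

Lemma Tg_l g i : Tg g (lshift M2 i) = zeta1 i.
Proof. exact: sum_idx_l. Qed.
Lemma Tg_r g j : Tg g (rshift M1 j) = zeta2 j + RtoC g^-1.
Proof. exact: sum_idx_r. Qed.

Lemma np1 i a : zeta1 i != z1 a.
Proof.
have [_ H _] := Hz1; have [H1 _] := H i.
by apply/eqP => E; apply: H1; exists a => //; rewrite E.
Qed.
Lemma np2 j b : zeta2 j != z2 b.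
Proof.
have [_ H _] := Hz2; have [H1 _] := H j.
by apply/eqP => E; apply: H1; exists b => //; rewrite E.
Qed.

Lemma factor_Pc g : exists rs : seq C,
  Pc g = (- RtoC linf) *: \prod_(r <- rs) ('X - r%:P) /\ size rs = (M1 + M2)%N.
Proof.
have [rs [H1 H2]] := factor_Pp mc lc (wc g) Hlinf.
by exists rs; split => //; rewrite H2 nsum_sumf.
Qed.

Lemma c0 : - RtoC linf != 0.
Proof. by rewrite oppr_eq0 RtoC_eq0. Qed.

Definition Aprops (d0 : C) : Prop :=
  [/\ forall i i', i != i' -> d0 * 2 <= `|zeta1 i - zeta1 i'|,
      forall j j', j != j' -> d0 * 2 <= `|zeta2 j - zeta2 j'|,
      forall i a, d0 <= `|zeta1 i - z1 a| &
      forall j b, d0 <= `|zeta2 j - z2 b|].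

Definition Bprops (d0 : C) (g : R) : Prop :=
  [/\ forall i j, d0 * 2 <= `|zeta1 i - (zeta2 j + RtoC g^-1)|,
      forall i b, d0 <= `|zeta1 i - (z2 b + RtoC g^-1)| &
      forall j a, d0 <= `|zeta2 j + RtoC g^-1 - z1 a|].

Lemma delta0_ex : exists d0 : C, 0 < d0 /\ Aprops d0.
Proof.
have [inj1 _ _] := Hz1; have [inj2 _ _] := Hz2.
have [e1 [e10 He1]] : exists e : C, 0 < e /\ forall p : 'I_M1 * 'I_M1,
    e <= (if p.1 == p.2 then 1 else `|zeta1 p.1 - zeta1 p.2| / 2).
  apply: pos_lb_fin => -[i i'] /=; case: eqP => [_|ne]; first exact: ltr01.
  rewrite divr_gt0 // normr_gt0 subr_eq0; apply/eqP => E; apply: ne; exact: inj1 E.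
have [e2 [e20 He2]] : exists e : C, 0 < e /\ forall p : 'I_M2 * 'I_M2,
    e <= (if p.1 == p.2 then 1 else `|zeta2 p.1 - zeta2 p.2| / 2).
  apply: pos_lb_fin => -[i i'] /=; case: eqP => [_|ne]; first exact: ltr01.
  rewrite divr_gt0 // normr_gt0 subr_eq0; apply/eqP => E; apply: ne; exact: inj2 E.
have [e3 [e30 He3]] : exists e : C, 0 < e /\ forall p : 'I_M1 * S1, e <= `|zeta1 p.1 - z1 p.2|.
  by apply: pos_lb_fin => -[i a] /=; rewrite normr_gt0 subr_eq0 np1.
have [e4 [e40 He4]] : exists e : C, 0 < e /\ forall p : 'I_M2 * S2, e <= `|zeta2 p.1 - z2 p.2|.
  by apply: pos_lb_fin => -[i a] /=; rewrite normr_gt0 subr_eq0 np2.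
have [e12 [e120 h1 h2]] := pos_lb2 e10 e20.
have [e34 [e340 h3 h4]] := pos_lb2 e30 e40.
have [d [d0 h12 h34]] := pos_lb2 e120 e340.
exists d; split => //; split.
- move=> i i' ne; have := He1 (i, i'); rewrite /= (negbTE ne) => h.
  by rewrite -ler_pdivlMr //; apply: le_trans h; apply: le_trans h12 h1.
- move=> i i' ne; have := He2 (i, i'); rewrite /= (negbTE ne) => h.
  by rewrite -ler_pdivlMr //; apply: le_trans h; apply: le_trans h12 h2.
- by move=> i a; apply: le_trans (He3 (i, a)); apply: le_trans h34 h3.
- by move=> i a; apply: le_trans (He4 (i, a)); apply: le_trans h34 h4.
Qed.

Lemma ev_B (d0 : C) : 0 < d0 -> \forall g \near (0:R)^', Bprops d0 g.
Proof.
move=> dpos.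
have d2 : 0 < d0 * 2 by rewrite mulr_gt0.
have B1 : \forall g \near (0:R)^', forall i j, d0 * 2 <= `|zeta1 i - (zeta2 j + RtoC g^-1)|.
  apply: filter_forall => i; apply: filter_forall => j.
  apply: filterS (ev_far (zeta1 i - zeta2 j) d2) => g.
  by rewrite opprD addrA.
have B2 : \forall g \near (0:R)^', forall i b, d0 <= `|zeta1 i - (z2 b + RtoC g^-1)|.
  apply: filter_forall => i; apply: filter_forall => b.
  apply: filterS (ev_far (zeta1 i - z2 b) dpos) => g.
  by rewrite opprD addrA.
have B3 : \forall g \near (0:R)^', forall j a, d0 <= `|zeta2 j + RtoC g^-1 - z1 a|.
  apply: filter_forall => j; apply: filter_forall => a.
  apply: filterS (ev_far_plus (zeta2 j - z1 a) dpos) => g.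
  by rewrite addrAC.
near=> g; split; near: g; [exact: B1 | exact: B2 | exact: B3].
Unshelve. all: by end_near.
Qed.

Lemma disjC d0 g : Aprops d0 -> Bprops d0 g ->
  forall i j w, `|w - Tg g i| < d0 -> `|w - Tg g j| < d0 -> i = j.
Proof.
move=> [A1 A2 A3 A4] [B1 B2 B3] i j w hi hj.
have hij : `|Tg g i - Tg g j| < d0 * 2.
  apply: le_lt_trans (ler_distD w _ _) _.
  by rewrite distrC mulr_natr mulr2n; apply: ltrD.
have contra : forall x : C, d0 * 2 <= x -> x < d0 * 2 -> False.
  by move=> x h1 h2; have := le_lt_trans h1 h2; rewrite ltxx.
case: (split_ordP i) hij => i1 -> hij; case: (split_ordP j) hij => j1 -> hij;
  rewrite ?Tg_l ?Tg_r in hij.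
- case: (eqVneq i1 j1) => [-> //|ne]; exfalso; exact: contra (A1 _ _ ne) hij.
- by exfalso; exact: contra (B1 i1 j1) hij.
- by exfalso; rewrite distrC in hij; exact: contra (B1 j1 i1) hij.
- case: (eqVneq i1 j1) => [-> //|ne]; exfalso.
  have E : zeta2 i1 + RtoC g^-1 - (zeta2 j1 + RtoC g^-1) = zeta2 i1 - zeta2 j1 by ring.
  by rewrite E in hij; exact: contra (A2 _ _ ne) hij.
Qed.

Lemma poleD d0 g : Aprops d0 -> Bprops d0 g ->
  forall i w s, `|w - Tg g i| < d0 -> w != wc g s.
Proof.
move=> [A1 A2 A3 A4] [B1 B2 B3] i w s hi; apply/eqP => E; subst w.
rewrite distrC in hi.
have contra : forall x : C, d0 <= x -> x < d0 -> False.
  by move=> x h1 h2; have := le_lt_trans h1 h2; rewrite ltxx.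
case: (split_ordP i) hi => i1 -> hi; case: s hi => [a|b] /= hi;
  rewrite ?Tg_l ?Tg_r in hi.
- exact: contra (A3 i1 a) hi.
- exact: contra (B2 i1 b) hi.
- exact: contra (B3 i1 a) hi.
- have E : zeta2 i1 + RtoC g^-1 - (z2 b + RtoC g^-1) = zeta2 i1 - z2 b by ring.
  by rewrite E in hi; exact: contra (A4 i1 b) hi.
Qed.

Lemma nonpole_l (p : C) : (forall a, p != z1 a) ->
  \forall g \near (0:R)^', forall s, p != wc g s.
Proof.
move=> Hp; apply: filter_forall => -[a|b] /=; first exact: nearW.
have H0 : (fun _ : R => p - z2 b) @ (0:R)^' --> p - z2 b by apply: cvg_cst.
apply: filterS (ev_minus_h_neq0 H0) => g.
by move=> hh; apply: contra_neq hh => ->; ring.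
Qed.

Lemma nonpole_r (p : C) : (forall b, p != z2 b) ->
  \forall g \near (0:R)^', forall s, p + RtoC g^-1 != wc g s.
Proof.
move=> Hp; apply: filter_forall => -[a|b] /=.
  have H0 : (fun _ : R => p - z1 a) @ (0:R)^' --> p - z1 a by apply: cvg_cst.
  apply: filterS (ev_plus_h_neq0 H0) => g.
  by rewrite /cpos /= => hh; apply: contra_neq hh => E; rewrite -E; ring.
apply: nearW => g; rewrite /cpos /=.
by apply: contra_neq (Hp b) => E; exact: addIr E.
Qed.


Lemma key_core (d : C) (tg tg' : R -> C) (v0 v0' : (S1 + S2)%type -> C) (D : C) :
  0 < d ->
  (forall g, tg g - tg' g = D) ->
  (\forall g \near (0:R)^', (forall s, tg g != wc g s) /\ (forall s, tg' g != wc g s)) ->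
  (forall s, vof (wc g) (tg g) s @[g --> (0:R)^'] --> v0 s) ->
  (forall s, vof (wc g) (tg' g) s @[g --> (0:R)^'] --> v0' s) ->
  Phi mc lc linf v0 = 0 -> Phi mc lc linf v0' != 0 ->
  \forall g \near (0:R)^', exists r, root (Pc g) r /\ `|r - tg g| < d.
Proof.
move=> dpos HD Hnp Hv Hv' HP0 HP0'.
pose N := (M1 + M2)%N.
pose K := d + `|D|.
have K0 : 0 <= K by rewrite addr_ge0 // ltW.
pose Rat g := \prod_(s : (S1 + S2)%type) (1 + D * vof (wc g) (tg' g) s) ^+ (mc s).
have HR : Rat g @[g --> (0:R)^'] --> \prod_(s : (S1 + S2)%type) (1 + D * v0' s) ^+ (mc s).
  apply: cvg_prod_seq => s.
  exact: (cvgXn (cvgD (cvg_cst (1:C)) (cvgM (cvg_cst D) (Hv' s)))).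
have HPt : Phi mc lc linf (vof (wc g) (tg g)) @[g --> (0:R)^'] --> Phi mc lc linf v0.
  exact: (cvg_Phi Hv).
have HPt' : Phi mc lc linf (vof (wc g) (tg' g)) @[g --> (0:R)^'] --> Phi mc lc linf v0'.
  exact: (cvg_Phi Hv').
have HF : (Phi mc lc linf (vof (wc g) (tg g)) * Rat g * K ^+ N) @[g --> (0:R)^'] -->
     Phi mc lc linf v0 * \prod_(s : (S1 + S2)%type) (1 + D * v0' s) ^+ (mc s) * K ^+ N.
  exact: (cvgM (cvgM HPt HR) (cvg_cst (K ^+ N))).
rewrite HP0 !mul0r in HF.
have HG : (d ^+ N * Phi mc lc linf (vof (wc g) (tg' g))) @[g --> (0:R)^'] --> d ^+ N * Phi mc lc linf v0'.
  exact: (cvgM (cvg_cst (d ^+ N)) HPt').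
have Gn0 : d ^+ N * Phi mc lc linf v0' != 0 by rewrite mulf_neq0 // expf_neq0 // lt0r_neq0.
have Hlt := ev_norm_lt HF HG Gn0.
near=> g.
have [Ht Ht'] : (forall s, tg g != wc g s) /\ (forall s, tg' g != wc g s) by near: g; exact: Hnp.
have hlt : `|Phi mc lc linf (vof (wc g) (tg g)) * Rat g * K ^+ N| <
           `|d ^+ N * Phi mc lc linf (vof (wc g) (tg' g))| by near: g; exact: Hlt.
have [rs [HPr hs]] := factor_Pc g.
have nP : forall w, `|(Pc g).[w]| = `|- RtoC linf| * \prod_(r <- rs) `|w - r|.
  move=> w; rewrite HPr hornerZ horner_prod normrM normr_prod.
  by congr (_ * _); apply: eq_bigr => r _; rewrite hornerXsubC.
have P_t : (Pc g).[tg g] = twist mc lc (wc g) linf (tg g) * ((Qp mc (wc g)).[tg' g] * Rat g).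
  by rewrite /Pc (hornerP mc lc linf Ht) (Q_ratio mc (tg g) Ht') HD.
have P_t' : (Pc g).[tg' g] = twist mc lc (wc g) linf (tg' g) * (Qp mc (wc g)).[tg' g].
  by rewrite /Pc (hornerP mc lc linf Ht').
have Qn0 := hornerQ_neq0 mc Ht'.
have cpos : 0 < `|- RtoC linf| by rewrite normr_gt0 c0.
have Hineq : \prod_(r <- rs) `|tg g - r| * (d + `|tg g - tg' g|) ^+ (size rs) <
             d ^+ (size rs) * \prod_(r <- rs) `|tg' g - r|.
  rewrite HD hs -/N -/K.
  rewrite -(ltr_pM2l cpos).
  have L : `|- RtoC linf| * (\prod_(r <- rs) `|tg g - r| * K ^+ N) =
           `|Phi mc lc linf (vof (wc g) (tg g)) * Rat g * K ^+ N| * `|(Qp mc (wc g)).[tg' g]|.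
    rewrite mulrA -nP P_t twist_Phi !normrM normrX (ger0_norm K0); ring.
  have Rr : `|- RtoC linf| * (d ^+ N * \prod_(r <- rs) `|tg' g - r|) =
           `|d ^+ N * Phi mc lc linf (vof (wc g) (tg' g))| * `|(Qp mc (wc g)).[tg' g]|.
    rewrite mulrCA -nP P_t' twist_Phi !normrM normrX (gtr0_norm dpos); ring.
  by rewrite L Rr ltr_pM2r ?normr_gt0.
have [r [hr hrd]] := root_near dpos Hineq.
by exists r; split => //; rewrite HPr root_mem // c0.
Unshelve. all: by end_near.
Qed.

Lemma key (d : C) : 0 < d -> forall i,
  \forall g \near (0:R)^', exists r, root (Pc g) r /\ `|r - Tg g i| < d.
Proof.
move=> dpos i.
have [t1 [t1np t1nz]] := exists_tau Hz1.
have [t2 [t2np t2nz]] := exists_tau Hz2.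
have [_ Hz1p _] := Hz1; have [_ Hz2p _] := Hz2.
case: (split_ordP i) => i1 ->.
  have H0 : (fun _ : R => zeta1 i1) @ (0:R)^' --> zeta1 i1 by apply: cvg_cst.
  have H0' : (fun _ : R => t1) @ (0:R)^' --> t1 by apply: cvg_cst.
  have Hnp : \forall g \near (0:R)^', (forall s, zeta1 i1 != wc g s) /\ (forall s, t1 != wc g s).
    near=> g; split; near: g; [exact: nonpole_l (np1 i1) | exact: nonpole_l t1np].
  have HP0 : Phi mc lc linf (sumf (vof z1 (zeta1 i1)) (fun _ => 0)) = 0.
    by rewrite Phi_l -twist_Phi; case: (Hz1p i1) => _ [].
  have HP0' : Phi mc lc linf (sumf (vof z1 t1) (fun _ => 0)) != 0.
    by rewrite Phi_l -twist_Phi.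
  have := key_core dpos (fun g => erefl (zeta1 i1 - t1)) Hnp (vlim_l z2 H0 (np1 i1)) (vlim_l z2 H0' t1np) HP0 HP0'.
  by apply: filterS => g; rewrite Tg_l.
have H0 : (zeta2 i1 + RtoC g^-1 - RtoC g^-1) @[g --> (0:R)^'] --> zeta2 i1.
  by under eq_fun do rewrite addrK; apply: cvg_cst.
have H0' : (t2 + RtoC g^-1 - RtoC g^-1) @[g --> (0:R)^'] --> t2.
  by under eq_fun do rewrite addrK; apply: cvg_cst.
have Hnp : \forall g \near (0:R)^', (forall s, zeta2 i1 + RtoC g^-1 != wc g s) /\
                                   (forall s, t2 + RtoC g^-1 != wc g s).
  near=> g; split; near: g; [exact: nonpole_r (np2 i1) | exact: nonpole_r t2np].
have HP0 : Phi mc lc linf (sumf (fun _ => 0) (vof z2 (zeta2 i1))) = 0.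
  by rewrite Phi_r -twist_Phi; case: (Hz2p i1) => _ [].
have HP0' : Phi mc lc linf (sumf (fun _ => 0) (vof z2 t2)) != 0.
  by rewrite Phi_r -twist_Phi.
have HD : forall g : R, zeta2 i1 + RtoC g^-1 - (t2 + RtoC g^-1) = zeta2 i1 - t2 by move=> g; ring.
have := key_core dpos HD Hnp (vlim_r z1 H0 (np2 i1)) (vlim_r z1 H0' t2np) HP0 HP0'.
by apply: filterS => g; rewrite Tg_r.
Unshelve. all: by end_near.
Qed.

Definition zeta_c (d0 : C) (g : R) (i : 'I_(M1 + M2)) : C :=
  xget 0 [set r | root (Pc g) r /\ `|r - Tg g i| < d0].

Lemma good_g d0 g : Aprops d0 -> Bprops d0 g ->
  (forall i, exists r, root (Pc g) r /\ `|r - Tg g i| < d0) ->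
  [/\ simple_zero_enum (twist mc lc (wc g) linf) (range (wc g)) (zeta_c d0 g),
      forall i, `|zeta_c d0 g i - Tg g i| < d0 &
      forall i r, root (Pc g) r -> `|r - Tg g i| < d0 -> zeta_c d0 g i = r].
Proof.
move=> HA HB Hex.
have [rs [HP hs]] := factor_Pc g.
have Hdisj := disjC HA HB.
have memP : forall r, root (Pc g) r = (r \in rs) by move=> r; rewrite HP root_mem // c0.
have Hex' : forall i, exists r, r \in rs /\ `|r - Tg g i| < d0.
  by move=> i; have [r [hr hd]] := Hex i; exists r; rewrite -memP.
have [urs Ha Hc] := counting_roots hs Hdisj Hex'.
have U : forall i r, root (Pc g) r -> `|r - Tg g i| < d0 -> zeta_c d0 g i = r.
  move=> i r hr hd; apply: xget_unique; first by split.
  move=> y [hy hyd].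
  exact: (Hc i y r (etrans (esym (memP y)) hy) (etrans (esym (memP r)) hr) hyd hd).
have Cl : forall i, root (Pc g) (zeta_c d0 g i) /\ `|zeta_c d0 g i - Tg g i| < d0.
  move=> i; have [r hr] := Hex i.
  by apply: (@xgetPex _ 0 [set r | root (Pc g) r /\ `|r - Tg g i| < d0]); exists r.
have NP : forall i s, zeta_c d0 g i != wc g s.
  by move=> i s; apply: (poleD HA HB) (Cl i).2.
split.
- split.
  + move=> i j E; apply: (Hdisj i j (zeta_c d0 g j)); last exact: (Cl j).2.
    by rewrite -E; exact: (Cl i).2.
  + move=> i; split; first by move=> [s _ Es]; move: (NP i s); rewrite Es eqxx.
    have Hr := (Cl i).1.
    have e := hornerP mc lc linf (NP i).
    have Qn := hornerQ_neq0 mc (NP i).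
    split.
      by move: Hr; rewrite /root /Pc e mulf_eq0 (negbTE Qn) orbF => /eqP.
    apply: (derive_simple_root HP c0 urs); last exact: NP i.
    by rewrite -memP.
  + move=> w hw tw0.
    have npw : forall s, w != wc g s.
      by move=> s; apply/eqP => E; apply: hw; exists s => //; rewrite E.
    have rw : root (Pc g) w by rewrite /root /Pc (hornerP mc lc linf npw) tw0 mul0r.
    have [i hi] := Ha w (etrans (esym (memP w)) rw).
    by exists i; rewrite (U i w rw hi).
- by move=> i; exact: (Cl i).2.
- exact: U.
Qed.

Lemma part1 : exists zeta, coupled_zero_ordering m1 m2 l1 l2 z1 z2 linf zeta1 zeta2 zeta.
Proof.
have [d0 [d0pos HA]] := delta0_ex.
exists (zeta_c d0).
have Ev : \forall g \near (0:R)^', Bprops d0 g /\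
     (forall i, exists r, root (Pc g) r /\ `|r - Tg g i| < d0).
  near=> g; split; near: g; first exact: ev_B.
  by apply: filter_forall => i; exact: key.
have Close : forall i (eps : C), 0 < eps ->
    \forall g \near (0:R)^', `|zeta_c d0 g i - Tg g i| < eps.
  move=> i eps epos.
  have [d [dpos h1 h2]] := pos_lb2 epos d0pos.
  near=> g.
  have [hB hK] : Bprops d0 g /\ (forall i, exists r, root (Pc g) r /\ `|r - Tg g i| < d0).
    by near: g; exact: Ev.
  have [r [hr hrd]] : exists r, root (Pc g) r /\ `|r - Tg g i| < d by near: g; exact: key.
  have [_ _ U] := good_g HA hB hK.
  rewrite (U i r hr (lt_le_trans hrd h2)).
  exact: lt_le_trans hrd h1.
split.
- apply: ball_of_near; apply: filterS Ev => g [hB hK].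
  by have [H _ _] := good_g HA hB hK.
- move=> i; apply/cvgrPdist_lt => eps epos.
  apply: filterS (Close (lshift M2 i) eps epos) => g.
  by rewrite Tg_l distrC.
- move=> j; apply/cvgrPdist_lt => eps epos.
  apply: filterS (Close (rshift M1 j) eps epos) => g.
  rewrite Tg_r => h.
  have -> : zeta2 j - (zeta_c d0 g (rshift M1 j) - RtoC g^-1) =
            - (zeta_c d0 g (rshift M1 j) - (zeta2 j + RtoC g^-1)) by ring.
  by rewrite normrN.
Unshelve. all: by end_near.
Qed.


Lemma part2 n (f : 'I_n -> 'I_n -> 'I_n -> C) (tau : 'rV[C]_n -> 'rV[C]_n) (circ : option R)
  (sg1 : S1 -> S1) (sg2 : S2 -> S2) (eps1 : 'I_M1 -> C) (eps2 : 'I_M2 -> C) :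
  forall zeta : R -> 'I_(M1 + M2) -> C,
  coupled_zero_ordering m1 m2 l1 l2 z1 z2 linf zeta1 zeta2 zeta ->
  forall (J1 : S1 -> nat -> R -> 'rV[C]_n) (J2 : S2 -> nat -> R -> 'rV[C]_n),
  admissible_config f tau circ (sum_sg sg1 sg2) (sumf m1 m2) (sumf J1 J2) ->
  hamiltonian f circ (sumf m1 m2) (sumf l1 l2) (cpos z1 z2 g) linf (sumf J1 J2)
              (zeta g) (sum_idx eps1 eps2)
    @[g --> (0 : R)^'] -->
  hamiltonian f circ m1 l1 z1 linf J1 zeta1 eps1
  + hamiltonian f circ m2 l2 z2 linf J2 zeta2 eps2.
Proof.
move=> zeta [Hd Hl Hr] J1 J2 [_ _ Hint].
have Hic : forall a b p q, (p < mc a)%N -> (q < mc b)%N ->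
    cintegrable circ (fun x => kappa f (sumf J1 J2 a p x) (sumf J1 J2 b q x)).
  exact: Hint.
have Hi1 : forall a b p q, (p < m1 a)%N -> (q < m1 b)%N ->
    cintegrable circ (fun x => kappa f (J1 a p x) (J1 b q x)).
  by move=> a b p q hp hq; exact: (Hic (inl a) (inl b) p q hp hq).
have Hi2 : forall a b p q, (p < m2 a)%N -> (q < m2 b)%N ->
    cintegrable circ (fun x => kappa f (J2 a p x) (J2 b q x)).
  by move=> a b p q hp hq; exact: (Hic (inr a) (inr b) p q hp hq).
have Ev := near0_of Hd.
have NP : forall i, \forall g \near (0:R)^', forall s, zeta g i != wc g s.
  move=> i; apply: filterS Ev => g [_ H _] s; apply/eqP => E.
  by apply: (H i).1; exists s => //; rewrite E.
have [_ Hz1p _] := Hz1; have [_ Hz2p _] := Hz2.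
have Hsplit : forall g, Defs.hamiltonian f circ mc lc (wc g) linf (sumf J1 J2) (zeta g) (sum_idx eps1 eps2) =
    \sum_(i < M1) eps1 i * Defs.charge f circ mc lc (wc g) linf (sumf J1 J2) (zeta g (lshift M2 i)) +
    \sum_(j < M2) eps2 j * Defs.charge f circ mc lc (wc g) linf (sumf J1 J2) (zeta g (rshift M1 j)).
  move=> g; rewrite /Defs.hamiltonian big_split_ord /=; congr (_ + _).
    by apply: eq_bigr => i _; rewrite sum_idx_l.
  by apply: eq_bigr => i _; rewrite sum_idx_r.
under eq_fun do rewrite Hsplit.
have L1 : (\sum_(i < M1) eps1 i * Defs.charge f circ mc lc (wc g) linf (sumf J1 J2) (zeta g (lshift M2 i)))
    @[g --> (0:R)^'] --> Defs.hamiltonian f circ m1 l1 z1 linf J1 zeta1 eps1.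
  apply: cvg_sum_seq => i.
  have Hd0 : dPhi mc lc (sumf (vof z1 (zeta1 i)) (fun _ => 0)) != 0.
    by rewrite dPhi_l -(derive_twist m1 l1 linf (np1 i)); case: (Hz1p i) => _ [].
  have Hc := charge_lim linf Hic (NP (lshift M2 i)) (vlim_l z2 (Hl i) (np1 i)) Hd0.
  rewrite dPhi_l Quad_l -(charge_eq l1 linf (np1 i) Hi1) in Hc.
  exact: (cvgM (cvg_cst (eps1 i)) Hc).
have L2 : (\sum_(j < M2) eps2 j * Defs.charge f circ mc lc (wc g) linf (sumf J1 J2) (zeta g (rshift M1 j)))
    @[g --> (0:R)^'] --> Defs.hamiltonian f circ m2 l2 z2 linf J2 zeta2 eps2.
  apply: cvg_sum_seq => j.
  have Hd0 : dPhi mc lc (sumf (fun _ => 0) (vof z2 (zeta2 j))) != 0.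
    by rewrite dPhi_r -(derive_twist m2 l2 linf (np2 j)); case: (Hz2p j) => _ [].
  have Hc := charge_lim linf Hic (NP (rshift M1 j)) (vlim_r z1 (Hr j) (np2 j)) Hd0.
  rewrite dPhi_r Quad_r -(charge_eq l2 linf (np2 j) Hi2) in Hc.
  exact: (cvgM (cvg_cst (eps2 j)) Hc).
exact: (cvgD L1 L2).
Qed.

End Main.

Unset Implicit Arguments.
Theorem theorem2p1 (R : realType) (n : nat) (f : 'I_n -> 'I_n -> 'I_n -> R[i])
    (tau : 'rV[R[i]]_n -> 'rV[R[i]]_n) (circ : option R) (linf : R)
    (S1 S2 : finType) (sg1 : S1 -> S1) (sg2 : S2 -> S2)
    (m1 : S1 -> nat) (m2 : S2 -> nat)
    (l1 : S1 -> nat -> R[i]) (l2 : S2 -> nat -> R[i])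
    (z1 : S1 -> R[i]) (z2 : S2 -> R[i])
    (zeta1 : 'I_(nsum m1) -> R[i]) (zeta2 : 'I_(nsum m2) -> R[i])
    (eps1 : 'I_(nsum m1) -> R[i]) (eps2 : 'I_(nsum m2) -> R[i]) :
  is_simple_lie f ->
  is_real_form f tau ->
  (forall L, circ = Some L -> 0 < L) ->
  linf != 0 ->
  is_realisation sg1 m1 l1 z1 ->
  is_realisation sg2 m2 l2 z2 ->
  simple_zero_enum (twist m1 l1 z1 linf) (range z1) zeta1 ->
  simple_zero_enum (twist m2 l2 z2 linf) (range z2) zeta2 ->
  (exists zeta : R -> 'I_(nsum m1 + nsum m2) -> R[i],
      coupled_zero_ordering m1 m2 l1 l2 z1 z2 linf zeta1 zeta2 zeta) /\
  (forall zeta : R -> 'I_(nsum m1 + nsum m2) -> R[i],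
      coupled_zero_ordering m1 m2 l1 l2 z1 z2 linf zeta1 zeta2 zeta ->
      forall (J1 : S1 -> nat -> R -> 'rV[R[i]]_n) (J2 : S2 -> nat -> R -> 'rV[R[i]]_n),
        admissible_config f tau circ (sum_sg sg1 sg2) (sumf m1 m2) (sumf J1 J2) ->
        hamiltonian f circ (sumf m1 m2) (sumf l1 l2) (cpos z1 z2 g) linf (sumf J1 J2)
                    (zeta g) (sum_idx eps1 eps2)
          @[g --> (0 : R)^'] -->
        hamiltonian f circ m1 l1 z1 linf J1 zeta1 eps1
        + hamiltonian f circ m2 l2 z2 linf J2 zeta2 eps2).
Proof.
move=> _ _ _ Hl _ _ Hz1 Hz2; split.
  by apply: part1.
move=> zeta Ho J1 J2 Ha.
exact: (part2 Hz1 Hz2 Ho Ha).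
Qed.
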